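(* Let $\mathbf{v}_1,\mathbf{r}_u,\mathbf{r}_v\in\mathbb{R}^3$ with $\mathbf{r}_u,\mathbf{r}_v$ linearly independent, and let $\mathbf{r}_q(u,v)=\mathbf{r}_u u+\mathbf{r}_v v+\mathbf{v}_1$. For integers $n\ge 0$, $|m|\le n$, $b\ge 0$, $c\ge 0$ define $$Q_{n,b}^{m,c}(u,v)=R_n^m(\mathbf{r}_q(u,v))\,u^b v^c,\qquad \psi_{n,b}^{m,c}=\int_0^1\!\!\int_0^{1-u}Q_{n,b}^{m,c}(u,v)\,dv\,du,\qquad j_{n,b}^{m,c}=\int_0^1 Q_{n,b}^{m,c}(u,1-u)\,du,$$ with the convention that $Q_{n,b}^{m,c}$, $\psi_{n,b}^{m,c}$, $j_{n,b}^{m,c}$ are zero whenever $n<0$ or $|m|>n$. Write $\mathbf{v}_1=(v_{1,x},v_{1,y},v_{1,z})^T$ and set $\xi_0=(v_{1,x}+i v_{1,y})/2$, $\eta_0=(v_{1,x}-i v_{1,y})/2$, $z_0=v_{1,z}$. Then for all integers $n\ge 0$, $|m|\le n$, $b\ge0$, $c\ge 0$, $$\psi_{n,b}^{m,c}=\frac{i\,\xi_0\,\psi_{n-1,b}^{m-1,c}+i\,\eta_0\,\psi_{n-1,b}^{m+1,c}-z_0\,\psi_{n-1,b}^{m,c}+j_{n,b}^{m,c}}{n+b+c+2}.$$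
   Context: The regular solid harmonics are defined for $n=0,1,2,\dots$, $m=-n,\dots,n$ by $$R_n^m(\mathbf{r})=\frac{(-1)^n i^{|m|}}{(n+|m|)!}\,r^n P_n^{|m|}(\cos\theta)\,e^{im\varphi},$$ where $(r,\theta,\varphi)$ are the spherical coordinates of $\mathbf{r}=(x,y,z)^T=r(\sin\theta\cos\varphi,\sin\theta\sin\varphi,\cos\theta)^T$, and for $m\ge 0$, $P_n^m(\mu)=\frac{(-1)^m(1-\mu^2)^{m/2}}{2^n n!}\frac{d^{m+n}}{d\mu^{m+n}}(\mu^2-1)^n$ are the associated Legendre functions. $R_n^m$ is taken to be $0$ when $|m|>n$ or $n<0$. *)

(* Defs.v *)
From Stdlib Require Import Reals ZArith.
From Coquelicot Require Import Coquelicot.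
Open Scope R_scope.

Definition vec3 := (R * R * R)%type.
Definition vx (p : vec3) : R := fst (fst p).
Definition vy (p : vec3) : R := snd (fst p).
Definition vz (p : vec3) : R := snd p.
Definition vadd (p q : vec3) : vec3 := (vx p + vx q, vy p + vy q, vz p + vz q).
Definition vscal (a : R) (p : vec3) : vec3 := (a * vx p, a * vy p, a * vz p).

Definition assoc_legendre (n m : nat) (mu : R) : R :=
  (-1) ^ m * (sqrt (1 - mu ^ 2)) ^ m / (2 ^ n * INR (fact n))
  * Derive_n (fun t => (t ^ 2 - 1) ^ n) (m + n) mu.

Definition sph_r (p : vec3) : R := sqrt (vx p ^ 2 + vy p ^ 2 + vz p ^ 2).
(* cos theta, with theta in [0, pi]; conventionally theta = 0 at the origin *)
Definition sph_cos_theta (p : vec3) : R :=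
  if Req_EM_T (sph_r p) 0 then 1 else vz p / sph_r p.
(* e^{i phi} = cos phi + i sin phi; conventionally phi = 0 on the z-axis *)
Definition sph_eiphi (p : vec3) : C :=
  let rho := sqrt (vx p ^ 2 + vy p ^ 2) in
  if Req_EM_T rho 0 then RtoC 1 else (vx p / rho, vy p / rho).

Definition Cpowz (w : C) (m : Z) : C :=
  if (0 <=? m)%Z then Cpow w (Z.to_nat m) else Cpow (Cinv w) (Z.to_nat (- m)).

Definition solid_R (n m : Z) (p : vec3) : C :=
  if ((n <? 0)%Z || (n <? Z.abs m)%Z)%bool then RtoC 0 else
  let nn := Z.to_nat n in
  let am := Z.to_nat (Z.abs m) in
  Cmult
    (Cdiv (Cmult (RtoC ((-1) ^ nn)) (Cpow Ci am)) (RtoC (INR (fact (nn + am)))))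
    (Cmult (RtoC (sph_r p ^ nn * assoc_legendre nn am (sph_cos_theta p)))
           (Cpowz (sph_eiphi p) m)).

Definition r_q (v1 ru rv : vec3) (u v : R) : vec3 :=
  vadd (vadd (vscal u ru) (vscal v rv)) v1.

Definition Q_fun (v1 ru rv : vec3) (n m : Z) (b c : nat) (u v : R) : C :=
  Cmult (solid_R n m (r_q v1 ru rv u v)) (RtoC (u ^ b * v ^ c)).

Definition psi (v1 ru rv : vec3) (n m : Z) (b c : nat) : C :=
  RInt (V := C_R_CompleteNormedModule)
    (fun u => RInt (V := C_R_CompleteNormedModule)
                (fun v => Q_fun v1 ru rv n m b c u v) 0 (1 - u)) 0 1.

Definition jfun (v1 ru rv : vec3) (n m : Z) (b c : nat) : C :=
  RInt (V := C_R_CompleteNormedModule)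
    (fun u => Q_fun v1 ru rv n m b c u (1 - u)) 0 1.

Definition lin_indep2 (ru rv : vec3) : Prop :=
  forall a b : R, vadd (vscal a ru) (vscal b rv) = (0, 0, 0) -> a = 0 /\ b = 0.

(* Main.v *)
Require Import Defs.
From Stdlib Require Import Reals ZArith Lia Lra.
From Coquelicot Require Import Coquelicot.
Open Scope R_scope.


Lemma is_derive_C_intro (f : R -> C) x (l : C) :
  is_derive (fun t => fst (f t)) x (fst l) ->
  is_derive (fun t => snd (f t)) x (snd l) ->
  is_derive (V := C_R_NormedModule) f x l.
Proof.
  intros H1 H2.
  unfold is_derive in *.
  assert (H := filterdiff_comp'_2 (K := R_AbsRing) (T := R_NormedModule) (U := R_NormedModule) (V := R_NormedModule) (W := C_R_NormedModule)
     (fun t => fst (f t)) (fun t => snd (f t)) (fun a b => (a, b)) x _ _ (fun a b => (a,b)) H1 H2).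
  eapply filterdiff_ext_lin.
  - eapply filterdiff_ext. 2: apply H.
    + intros y. simpl. destruct (f y); reflexivity.
    + eapply filterdiff_ext_lin. eapply filterdiff_ext. 2: apply filterdiff_id.
      intros [a b]; reflexivity. intros [a b]; reflexivity.
  - intros y. destruct l. reflexivity.
Qed.

Lemma is_derive_C_fst (f : R -> C) x (l : C) :
  is_derive (V := C_R_NormedModule) f x l -> is_derive (fun t => fst (f t)) x (fst l).
Proof.
  intros H. unfold is_derive in *.
  eapply filterdiff_ext_lin.
  apply (filterdiff_comp' (U := R_NormedModule) (V := C_R_NormedModule) (W := R_NormedModule) f (fun t : C => fst t) x _ (fun t : C => fst t) H).
  apply filterdiff_linear. apply (is_linear_fst (U := R_NormedModule) (V := R_NormedModule)).
  intros y. reflexivity.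
Qed.

Lemma is_derive_C_snd (f : R -> C) x (l : C) :
  is_derive (V := C_R_NormedModule) f x l -> is_derive (fun t => snd (f t)) x (snd l).
Proof.
  intros H. unfold is_derive in *.
  eapply filterdiff_ext_lin.
  apply (filterdiff_comp' (U := R_NormedModule) (V := C_R_NormedModule) (W := R_NormedModule) f (fun t : C => snd t) x _ (fun t : C => snd t) H).
  apply filterdiff_linear. apply (is_linear_snd (U := R_NormedModule) (V := R_NormedModule)).
  intros y. reflexivity.
Qed.

Ltac Csimpl := unfold Cmult, Cplus, Cminus, Copp, RtoC, Ci; simpl.
Ltac Cring := apply injective_projections; Csimpl; ring.

Lemma is_derive_C_iff (f : R -> C) x (l : C) :
  is_derive (V := C_R_NormedModule) f x l <->
  (is_derive (fun t => fst (f t)) x (fst l) /\ is_derive (fun t => snd (f t)) x (snd l)).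
Proof.
  split. intros H; split; [apply is_derive_C_fst|apply is_derive_C_snd]; auto.
  intros [H1 H2]; apply is_derive_C_intro; auto.
Qed.

Lemma is_derive_C_mult (f g : R -> C) x (df dg : C) :
  is_derive (V := C_R_NormedModule) f x df ->
  is_derive (V := C_R_NormedModule) g x dg ->
  is_derive (V := C_R_NormedModule) (fun t => (f t * g t)%C) x (df * g x + f x * dg)%C.
Proof.
  intros [Hf1 Hf2]%is_derive_C_iff [Hg1 Hg2]%is_derive_C_iff.
  apply is_derive_C_iff; split.
  - apply (is_derive_ext (fun t => fst (f t) * fst (g t) - snd (f t) * snd (g t))).
    intros; reflexivity.
    replace (fst (df * g x + f x * dg)%C) with
      ((fst df * fst (g x) + fst (f x) * fst dg) - (snd df * snd (g x) + snd (f x) * snd dg))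
      by (simpl; ring).
    apply (is_derive_minus (K := R_AbsRing) (V := R_NormedModule)); apply Derive.is_derive_mult; auto.
  - apply (is_derive_ext (fun t => fst (f t) * snd (g t) + snd (f t) * fst (g t))).
    intros; reflexivity.
    replace (snd (df * g x + f x * dg)%C) with
      ((fst df * snd (g x) + fst (f x) * snd dg) + (snd df * fst (g x) + snd (f x) * fst dg))
      by (simpl; ring).
    apply (is_derive_plus (K := R_AbsRing) (V := R_NormedModule)); apply Derive.is_derive_mult; auto.
Qed.

Lemma is_derive_C_const (c : C) x :
  is_derive (V := C_R_NormedModule) (fun _ => c) x (RtoC 0).
Proof. apply (is_derive_const (K := R_AbsRing) (V := C_R_NormedModule)). Qed.

Lemma is_derive_C_plus (f g : R -> C) x (df dg : C) :
  is_derive (V := C_R_NormedModule) f x df ->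
  is_derive (V := C_R_NormedModule) g x dg ->
  is_derive (V := C_R_NormedModule) (fun t => (f t + g t)%C) x (df + dg)%C.
Proof. intros H1 H2. apply (is_derive_plus (K := R_AbsRing) (V := C_R_NormedModule) _ _ _ _ _ H1 H2). Qed.

Lemma is_derive_C_RtoC x :
  is_derive (V := C_R_NormedModule) (fun t => RtoC t) x (RtoC 1).
Proof.
  apply is_derive_C_intro; simpl.
  apply (is_derive_id (K := R_AbsRing)).
  apply (is_derive_const (K := R_AbsRing) (V := R_NormedModule)).
Qed.

Lemma is_derive_C_ext (f g : R -> C) x (l l' : C) :
  (forall t, f t = g t) -> l = l' ->
  is_derive (V := C_R_NormedModule) f x l -> is_derive (V := C_R_NormedModule) g x l'.
Proof. intros H <-. apply is_derive_ext. exact H. Qed.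

Lemma is_derive_C_pow (g : R -> C) x (dg : C) (K : nat) :
  is_derive (V := C_R_NormedModule) g x dg ->
  is_derive (V := C_R_NormedModule) (fun t => Cpow (g t) K) x (RtoC (INR K) * dg * Cpow (g x) (pred K))%C.
Proof.
  intros Hg. induction K as [|K IH].
  - apply (is_derive_C_ext (fun _ => RtoC 1) _ _ (RtoC 0)). intros; reflexivity.
    Cring. apply is_derive_C_const.
  - apply (is_derive_C_ext (fun t => g t * Cpow (g t) K)%C _ _ (dg * Cpow (g x) K + g x * (RtoC (INR K) * dg * Cpow (g x) (pred K)))%C).
    intros; reflexivity.
    2: apply (is_derive_C_mult _ _ _ _ _ Hg IH).
    destruct K as [|K].
    + Cring.
    + change (pred (S (S K))) with (S K). change (pred (S K)) with K.
      change (Cpow (g x) (S K)) with (g x * Cpow (g x) K)%C.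
      rewrite !S_INR.
      generalize (Cpow (g x) K). intros c. Cring.
Qed.


Lemma cont_of_pt (f : R -> R) x : continuity_pt f x -> continuous f x.
Proof. intros H. apply continuity_pt_filterlim. exact H. Qed.

Lemma cont2d_snd f x y : continuity_2d_pt f x y -> continuity_pt (fun t => f x t) y.
Proof.
  intros H. apply continuity_pt_locally. intros eps.
  destruct (H eps) as [d Hd]. exists d. intros u Hu.
  apply Hd. rewrite Rminus_eq_0, Rabs_R0. apply cond_pos. exact Hu.
Qed.

Lemma cont2d_fst f x y : continuity_2d_pt f x y -> continuity_pt (fun t => f t y) x.
Proof.
  intros H. apply continuity_pt_locally. intros eps.
  destruct (H eps) as [d Hd]. exists d. intros u Hu.
  apply Hd. exact Hu. rewrite Rminus_eq_0, Rabs_R0. apply cond_pos.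
Qed.

Lemma cont2d_anti f c x : continuity_2d_pt f x (c - x) -> continuity_pt (fun t => f t (c - t)) x.
Proof.
  intros H. apply continuity_pt_locally. intros eps.
  destruct (H eps) as [d Hd]. exists d. intros u Hu.
  apply Hd. exact Hu.
  replace (c - u - (c - x)) with (- (u - x)) by ring. rewrite Rabs_Ropp. exact Hu.
Qed.

Lemma locally_2d_all (P : R -> R -> Prop) x y : (forall u v, P u v) -> locally_2d P x y.
Proof. intros H. exists (mkposreal 1 Rlt_0_1). intros; apply H. Qed.

Lemma ex_RInt_c2d f x a b : (forall y, continuity_2d_pt f x y) -> ex_RInt (fun t => f x t) a b.
Proof.
  intros H. apply (ex_RInt_continuous (V := R_CompleteNormedModule)). intros z _.
  apply cont_of_pt. apply cont2d_snd. apply H.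
Qed.

Lemma param_deriv (f fu : R -> R -> R) x :
  (forall u v, is_derive (fun t => f t v) u (fu u v)) ->
  (forall u v, continuity_2d_pt f u v) ->
  (forall u v, continuity_2d_pt fu u v) ->
  is_derive (fun x => RInt (fun t => f x t) 0 (1 - x)) x
    (RInt (fun t => fu x t) 0 (1 - x) - f x (1 - x)).
Proof.
  intros Hd Cf Cfu.
  assert (HD : forall u v, Derive (fun z => f z v) u = fu u v).
  { intros; apply is_derive_unique; apply Hd. }
  assert (CD : forall u v, continuity_2d_pt (fun u v => Derive (fun z => f z v) u) u v).
  { intros u v. eapply continuity_2d_pt_ext. 2: apply (Cfu u v). intros; rewrite HD; reflexivity. }
  assert (H := is_derive_RInt_param_bound_comp f (fun _ => 0) (fun x => 1 - x) x 0 (-1)).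
  replace (RInt (fun t => fu x t) 0 (1 - x) - f x (1 - x)) with
    (RInt (fun t => Derive (fun u => f u t) x) 0 (1 - x) + - f x 0 * 0 + f x (1 - x) * (-1)).
  2: { rewrite (RInt_ext _ (fun t => fu x t)). ring. intros; apply HD. }
  apply H.
  - apply filter_forall. intros; apply ex_RInt_c2d; auto.
  - exists (mkposreal 1 Rlt_0_1). apply filter_forall. intros; apply ex_RInt_c2d; auto.
  - exists (mkposreal 1 Rlt_0_1). apply filter_forall. intros; apply ex_RInt_c2d; auto.
  - apply (is_derive_const (K := R_AbsRing) (V := R_NormedModule)).
  - eapply is_derive_ext. intros t; reflexivity.
    replace (-1) with (0 - 1) by ring.
    apply (is_derive_minus (K := R_AbsRing) (V := R_NormedModule)).
    apply (is_derive_const (K := R_AbsRing) (V := R_NormedModule)).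
    apply (is_derive_id (K := R_AbsRing)).
  - exists (mkposreal 1 Rlt_0_1). apply filter_forall. intros; eexists; apply Hd.
  - intros; apply CD.
  - apply locally_2d_all. intros; apply CD.
  - apply locally_2d_all. intros; apply CD.
  - apply cont2d_snd; auto.
  - apply cont2d_snd; auto.
Qed.

Lemma RInt_plus_R (f g : R -> R) a b : ex_RInt f a b -> ex_RInt g a b ->
  RInt (fun x => f x + g x) a b = RInt f a b + RInt g a b.
Proof. intros; apply (RInt_plus (V := R_CompleteNormedModule)); auto. Qed.
Lemma eqR (a b : R) : a = b -> a = b.
Proof. auto. Qed.
Lemma RInt_ext_R (f g : R -> R) a b : (forall x, f x = g x) -> RInt f a b = RInt g a b.
Proof. intros H. apply RInt_ext. intros; apply H. Qed.
Lemma RInt_scal_R (f : R -> R) a b l : ex_RInt f a b ->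
  RInt (fun x => l * f x) a b = l * RInt f a b.
Proof. intros; apply (RInt_scal (V := R_CompleteNormedModule)); auto. Qed.
Lemma ex_RInt_cpt (f : R -> R) a b : (forall x, continuity_pt f x) -> ex_RInt f a b.
Proof. intros H. apply (ex_RInt_continuous (V := R_CompleteNormedModule)). intros; apply cont_of_pt; auto. Qed.
Lemma cpt_of_derive (f : R -> R) x l : is_derive f x l -> continuity_pt f x.
Proof.
  intros H. apply continuity_pt_filterlim. apply (ex_derive_continuous (K := R_AbsRing) (V := R_NormedModule)).
  eexists; exact H.
Qed.

Section TriReal.
Variables g gu gv guu : R -> R -> R.
Hypothesis Hgu : forall x y, is_derive (fun t => g t y) x (gu x y).
Hypothesis Hgv : forall x y, is_derive (fun t => g x t) y (gv x y).
Hypothesis Hguu : forall x y, is_derive (fun t => gu t y) x (guu x y).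
Hypothesis Cg : forall x y, continuity_2d_pt g x y.
Hypothesis Cgu : forall x y, continuity_2d_pt gu x y.
Hypothesis Cgv : forall x y, continuity_2d_pt gv x y.
Hypothesis Cguu : forall x y, continuity_2d_pt guu x y.

Lemma tri_h_cont x : continuity_pt (fun x => RInt (fun t => g x t) 0 (1 - x)) x.
Proof. eapply cpt_of_derive. apply param_deriv; auto. Qed.

Lemma tri_real :
  RInt (fun x => RInt (fun v => x * gu x v + v * gv x v + 2 * g x v) 0 (1 - x)) 0 1 =
  RInt (fun x => g x (1 - x)) 0 1.
Proof.
  set (h := fun x => RInt (fun t => g x t) 0 (1 - x)).
  set (I := fun x => RInt (fun t => gu x t) 0 (1 - x)).
  assert (Dh : forall x, is_derive h x (I x - g x (1 - x))) by (intros; apply param_deriv; auto).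
  assert (DI : forall x, is_derive I x (RInt (fun t => guu x t) 0 (1 - x) - gu x (1 - x)))
    by (intros; apply param_deriv; auto).
  assert (CI : forall x, continuity_pt I x) by (intros; eapply cpt_of_derive; apply DI).
  assert (Ch : forall x, continuity_pt h x) by (intros; eapply cpt_of_derive; apply Dh).
  assert (Cgd : forall x, continuity_pt (fun x => g x (1 - x)) x) by (intros; apply cont2d_anti; auto).
  assert (S1 : forall x, RInt (fun v => x * gu x v + v * gv x v + 2 * g x v) 0 (1 - x) =
                 (h x + x * (I x - g x (1 - x))) + g x (1 - x)).
  { intros x.
    assert (Cv : forall F, (forall x y, continuity_2d_pt F x y) -> forall v, continuity_pt (fun v => F x v) v)
      by (intros; apply cont2d_snd; auto).
    rewrite (RInt_ext_R _ (fun v => (x * gu x v + (v * gv x v + g x v)) + g x v)).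
    2: { intros y. ring. }
    assert (E1 : ex_RInt (fun v => x * gu x v) 0 (1 - x)).
    { apply ex_RInt_cpt. intros; apply continuity_pt_mult. apply continuity_pt_const; intros ? ?; auto.
      apply (Cv gu Cgu). }
    assert (E2 : ex_RInt (fun v => v * gv x v + g x v) 0 (1 - x)).
    { apply ex_RInt_cpt. intros; apply continuity_pt_plus. apply continuity_pt_mult.
      apply derivable_continuous_pt, derivable_pt_id. apply (Cv gv Cgv). apply (Cv g Cg). }
    assert (E3 : ex_RInt (fun v => g x v) 0 (1 - x)) by (apply ex_RInt_cpt; apply (Cv g Cg)).
    rewrite RInt_plus_R; auto. 2: { apply (ex_RInt_plus (V := R_NormedModule)); auto. }
    rewrite RInt_plus_R; auto.
    rewrite (RInt_scal_R (fun v => gu x v)). 2: apply ex_RInt_c2d; auto.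
    assert (IBP : RInt (fun v => v * gv x v + g x v) 0 (1 - x) = (1 - x) * g x (1 - x) - 0 * g x 0).
    { apply is_RInt_unique.
      apply (is_RInt_derive (V := R_CompleteNormedModule) (fun v => v * g x v)).
      - intros t _. eapply is_derive_ext. intros; reflexivity.
        replace (t * gv x t + g x t) with (1 * g x t + t * gv x t) by ring.
        apply Derive.is_derive_mult. apply (is_derive_id (K := R_AbsRing)). apply Hgv.
      - intros t _. apply cont_of_pt. apply continuity_pt_plus. apply continuity_pt_mult.
        apply derivable_continuous_pt, derivable_pt_id. apply (Cv gv Cgv). apply (Cv g Cg). }
    rewrite IBP. unfold h, I. change (RInt (g x) 0 (1 - x)) with (RInt (fun t => g x t) 0 (1 - x)). generalize (RInt (fun v => gu x v) 0 (1 - x)) (RInt (fun t => g x t) 0 (1 - x)). intros A B. apply eqR. ring. }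
  rewrite (RInt_ext_R _ _ _ _ S1).
  assert (CH : forall x, continuity_pt (fun x => h x + x * (I x - g x (1 - x))) x).
  { intros x. apply continuity_pt_plus. auto. apply continuity_pt_mult.
    apply derivable_continuous_pt, derivable_pt_id. apply continuity_pt_minus; auto. }
  rewrite RInt_plus_R. 2: apply ex_RInt_cpt; auto. 2: apply ex_RInt_cpt; auto.
  assert (FT : RInt (fun x => h x + x * (I x - g x (1 - x))) 0 1 = 1 * h 1 - 0 * h 0).
  { apply is_RInt_unique.
    apply (is_RInt_derive (V := R_CompleteNormedModule) (fun x => x * h x)).
    - intros t _. eapply is_derive_ext. intros; reflexivity.
      replace (h t + t * (I t - g t (1 - t))) with (1 * h t + t * (I t - g t (1 - t))) by ring.
      apply Derive.is_derive_mult. apply (is_derive_id (K := R_AbsRing)). apply Dh.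
    - intros t _. apply cont_of_pt. apply CH. }
  rewrite FT. unfold h. replace (1 - 1) with 0 by ring.
  assert (Z0 : RInt (fun t => g 1 t) 0 0 = 0) by apply (RInt_point (V := R_CompleteNormedModule)).
  rewrite Z0. apply eqR. ring.
Qed.
End TriReal.


Inductive Good : (R -> R -> C) -> Prop :=
| Gconst c : Good (fun _ _ => c)
| Gu : Good (fun u _ => RtoC u)
| Gv : Good (fun _ v => RtoC v)
| Gplus f g : Good f -> Good g -> Good (fun u v => (f u v + g u v)%C)
| Gmult f g : Good f -> Good g -> Good (fun u v => (f u v * g u v)%C)
| Gext f g : Good f -> (forall u v, f u v = g u v) -> Good g.

Lemma good_du f : Good f -> exists fu, Good fu /\
  forall x y, is_derive (V := C_R_NormedModule) (fun t => f t y) x (fu x y).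
Proof.
  induction 1 as [c| | |f g Hf [fu [Gfu Dfu]] Hg [gu [Ggu Dgu]]|f g Hf [fu [Gfu Dfu]] Hg [gu [Ggu Dgu]]|f g Hf [fu [Gfu Dfu]] E].
  - exists (fun _ _ => RtoC 0). split. constructor. intros; apply is_derive_C_const.
  - exists (fun _ _ => RtoC 1). split. constructor. intros; apply is_derive_C_RtoC.
  - exists (fun _ _ => RtoC 0). split. constructor. intros; apply is_derive_C_const.
  - exists (fun u v => (fu u v + gu u v)%C). split. constructor; auto.
    intros. apply (is_derive_C_plus (fun t => f t y) (fun t => g t y)); auto.
  - exists (fun u v => (fu u v * g u v + f u v * gu u v)%C). split.
    constructor; constructor; auto.
    intros. apply (is_derive_C_mult (fun t => f t y) (fun t => g t y)); auto.
  - exists fu. split; auto. intros. eapply is_derive_C_ext. intros; apply E. reflexivity. apply Dfu.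
Qed.

Lemma good_dv f : Good f -> exists fv, Good fv /\
  forall x y, is_derive (V := C_R_NormedModule) (fun t => f x t) y (fv x y).
Proof.
  induction 1 as [c| | |f g Hf [fu [Gfu Dfu]] Hg [gu [Ggu Dgu]]|f g Hf [fu [Gfu Dfu]] Hg [gu [Ggu Dgu]]|f g Hf [fu [Gfu Dfu]] E].
  - exists (fun _ _ => RtoC 0). split. constructor. intros; apply is_derive_C_const.
  - exists (fun _ _ => RtoC 0). split. constructor. intros; apply is_derive_C_const.
  - exists (fun _ _ => RtoC 1). split. constructor. intros; apply is_derive_C_RtoC.
  - exists (fun u v => (fu u v + gu u v)%C). split. constructor; auto.
    intros. apply (is_derive_C_plus (fun t => f x t) (fun t => g x t)); auto.
  - exists (fun u v => (fu u v * g u v + f u v * gu u v)%C). split.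
    constructor; constructor; auto.
    intros. apply (is_derive_C_mult (fun t => f x t) (fun t => g x t)); auto.
  - exists fu. split; auto. intros. eapply is_derive_C_ext. intros; apply E. reflexivity. apply Dfu.
Qed.

Lemma good_cont f : Good f -> forall x y,
  continuity_2d_pt (fun u v => fst (f u v)) x y /\ continuity_2d_pt (fun u v => snd (f u v)) x y.
Proof.
  induction 1 as [c| | |f g Hf IHf Hg IHg|f g Hf IHf Hg IHg|f g Hf IHf E]; intros x y.
  - split; apply continuity_2d_pt_const.
  - split; simpl. apply continuity_2d_pt_id1. apply continuity_2d_pt_const.
  - split; simpl. apply continuity_2d_pt_id2. apply continuity_2d_pt_const.
  - destruct (IHf x y), (IHg x y). split; simpl; apply continuity_2d_pt_plus; auto.
  - destruct (IHf x y), (IHg x y). split; simpl.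
    apply continuity_2d_pt_minus; apply continuity_2d_pt_mult; auto.
    apply continuity_2d_pt_plus; apply continuity_2d_pt_mult; auto.
  - destruct (IHf x y) as [A B]. split.
    + apply (continuity_2d_pt_ext (fun u v => fst (f u v))); auto. intros; rewrite E; reflexivity.
    + apply (continuity_2d_pt_ext (fun u v => snd (f u v))); auto. intros; rewrite E; reflexivity.
Qed.

Lemma RInt_C (f : R -> C) a b :
  ex_RInt (fun t => fst (f t)) a b -> ex_RInt (fun t => snd (f t)) a b ->
  RInt (V := C_R_CompleteNormedModule) f a b =
  (RInt (fun t => fst (f t)) a b, RInt (fun t => snd (f t)) a b).
Proof.
  intros H1 H2. apply (is_RInt_unique (V := C_R_CompleteNormedModule)).
  apply (is_RInt_fct_extend_pair (U := R_NormedModule) (V := R_NormedModule)); apply (RInt_correct (V := R_CompleteNormedModule)); auto.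
Qed.

Lemma ex_RInt_C (f : R -> C) a b :
  ex_RInt (fun t => fst (f t)) a b -> ex_RInt (fun t => snd (f t)) a b ->
  ex_RInt (V := C_R_NormedModule) f a b.
Proof.
  intros H1 H2. eexists.
  apply (is_RInt_fct_extend_pair (U := R_NormedModule) (V := R_NormedModule)); apply (RInt_correct (V := R_CompleteNormedModule)); auto.
Qed.

Lemma ex_RInt_C_fst (f : R -> C) a b : ex_RInt (V := C_R_NormedModule) f a b -> ex_RInt (fun t => fst (f t)) a b.
Proof. intros [l H]. eexists. apply (is_RInt_fct_extend_fst (U := R_NormedModule) (V := R_NormedModule) f a b l H). Qed.
Lemma ex_RInt_C_snd (f : R -> C) a b : ex_RInt (V := C_R_NormedModule) f a b -> ex_RInt (fun t => snd (f t)) a b.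
Proof. intros [l H]. eexists. apply (is_RInt_fct_extend_snd (U := R_NormedModule) (V := R_NormedModule) f a b l H). Qed.

Lemma RInt_Cplus (f g : R -> C) a b :
  ex_RInt (V := C_R_NormedModule) f a b -> ex_RInt (V := C_R_NormedModule) g a b ->
  RInt (V := C_R_CompleteNormedModule) (fun t => (f t + g t)%C) a b =
  (RInt (V := C_R_CompleteNormedModule) f a b + RInt (V := C_R_CompleteNormedModule) g a b)%C.
Proof. intros; apply (RInt_plus (V := C_R_CompleteNormedModule)); auto. Qed.

Lemma RInt_Cmult_l (c : C) (f : R -> C) a b :
  ex_RInt (V := C_R_NormedModule) f a b ->
  RInt (V := C_R_CompleteNormedModule) (fun t => (c * f t)%C) a b =
  (c * RInt (V := C_R_CompleteNormedModule) f a b)%C.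
Proof.
  intros H. pose proof (ex_RInt_C_fst _ _ _ H) as H1. pose proof (ex_RInt_C_snd _ _ _ H) as H2.
  rewrite (RInt_C f) by auto.
  destruct c as [c1 c2].
  rewrite RInt_C; simpl.
  - apply injective_projections; simpl.
    + rewrite (RInt_ext_R _ (fun t => c1 * fst (f t) + (- c2) * snd (f t))) by (intros; ring).
      rewrite RInt_plus_R by (apply (ex_RInt_scal (V := R_NormedModule)); auto).
      rewrite !RInt_scal_R by auto. apply eqR; ring.
    + rewrite RInt_plus_R by (apply (ex_RInt_scal (V := R_NormedModule)); auto).
      rewrite !RInt_scal_R by auto. apply eqR; ring.
  - eapply ex_RInt_ext. 2: apply (ex_RInt_minus (V := R_NormedModule)); [apply (ex_RInt_scal (V := R_NormedModule) _ _ _ c1 H1)|apply (ex_RInt_scal (V := R_NormedModule) _ _ _ c2 H2)].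
    intros; simpl; reflexivity.
  - eapply ex_RInt_ext. 2: apply (ex_RInt_plus (V := R_NormedModule)); [apply (ex_RInt_scal (V := R_NormedModule) _ _ _ c1 H2)|apply (ex_RInt_scal (V := R_NormedModule) _ _ _ c2 H1)].
    intros; simpl; reflexivity.
Qed.

Definition psiC (f : R -> R -> C) : C :=
  RInt (V := C_R_CompleteNormedModule)
    (fun u => RInt (V := C_R_CompleteNormedModule) (fun v => f u v) 0 (1 - u)) 0 1.
Definition jC (f : R -> R -> C) : C :=
  RInt (V := C_R_CompleteNormedModule) (fun u => f u (1 - u)) 0 1.
Definition psiR (g : R -> R -> R) : R :=
  RInt (fun u => RInt (fun v => g u v) 0 (1 - u)) 0 1.

Lemma is_derive_C_unique (f : R -> C) x l1 l2 :
  is_derive (V := C_R_NormedModule) f x l1 -> is_derive (V := C_R_NormedModule) f x l2 -> l1 = l2.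
Proof.
  intros [A1 B1]%is_derive_C_iff [A2 B2]%is_derive_C_iff.
  apply is_derive_unique in A1, A2, B1, B2.
  apply injective_projections; congruence.
Qed.

Lemma good_du_comp f : Good f -> exists fu, Good fu /\
  (forall x y, is_derive (fun t => fst (f t y)) x (fst (fu x y))) /\
  (forall x y, is_derive (fun t => snd (f t y)) x (snd (fu x y))).
Proof.
  intros G. destruct (good_du f G) as [fu [Gfu D]]. exists fu. split; auto.
  split; intros; [apply is_derive_C_fst|apply is_derive_C_snd]; apply D.
Qed.

Lemma good_inner_cont f : Good f -> forall x,
  continuity_pt (fun x => RInt (fun t => fst (f x t)) 0 (1 - x)) x /\
  continuity_pt (fun x => RInt (fun t => snd (f x t)) 0 (1 - x)) x.
Proof.
  intros G x. destruct (good_du_comp f G) as [fu [Gfu [D1 D2]]].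
  split; eapply cpt_of_derive.
  - apply (param_deriv (fun u v => fst (f u v)) (fun u v => fst (fu u v))); auto;
    intros; first [apply (good_cont f G)|apply (good_cont fu Gfu)].
  - apply (param_deriv (fun u v => snd (f u v)) (fun u v => snd (fu u v))); auto;
    intros; first [apply (good_cont f G)|apply (good_cont fu Gfu)].
Qed.

Lemma good_ex_inner f u : Good f -> ex_RInt (V := C_R_NormedModule) (fun v => f u v) 0 (1 - u).
Proof.
  intros G. apply ex_RInt_C; apply (ex_RInt_c2d (fun u v => _ (f u v))); intros; apply (good_cont f G).
Qed.

Lemma good_inner_eq f u : Good f ->
  RInt (V := C_R_CompleteNormedModule) (fun v => f u v) 0 (1 - u) =
  (RInt (fun v => fst (f u v)) 0 (1 - u), RInt (fun v => snd (f u v)) 0 (1 - u)).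
Proof.
  intros G. apply RInt_C; apply (ex_RInt_c2d (fun u v => _ (f u v))); intros; apply (good_cont f G).
Qed.

Lemma good_ex_outer f : Good f ->
  ex_RInt (V := C_R_NormedModule) (fun u => RInt (V := C_R_CompleteNormedModule) (fun v => f u v) 0 (1 - u)) 0 1.
Proof.
  intros G. eapply ex_RInt_ext. intros x _. symmetry. apply good_inner_eq. exact G.
  apply ex_RInt_C; simpl; apply ex_RInt_cpt; intros; apply (good_inner_cont f G).
Qed.

Lemma psi_comp f : Good f -> psiC f = (psiR (fun u v => fst (f u v)), psiR (fun u v => snd (f u v))).
Proof.
  intros G. unfold psiC, psiR.
  rewrite (RInt_ext (V := C_R_CompleteNormedModule) _ (fun u => (RInt (fun v => fst (f u v)) 0 (1 - u), RInt (fun v => snd (f u v)) 0 (1 - u)))).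
  2: { intros; apply good_inner_eq; auto. }
  apply RInt_C; simpl; apply ex_RInt_cpt; intros; apply (good_inner_cont f G).
Qed.

Lemma good_ex_j f : Good f -> ex_RInt (V := C_R_NormedModule) (fun u => f u (1 - u)) 0 1.
Proof.
  intros G. apply ex_RInt_C; apply ex_RInt_cpt; intros; apply (cont2d_anti (fun u v => _ (f u v))); apply (good_cont f G).
Qed.

Lemma j_comp f : Good f -> jC f = (RInt (fun u => fst (f u (1 - u))) 0 1, RInt (fun u => snd (f u (1 - u))) 0 1).
Proof.
  intros G. unfold jC. apply RInt_C; apply ex_RInt_cpt; intros; apply (cont2d_anti (fun u v => _ (f u v))); apply (good_cont f G).
Qed.

Lemma psi_plus f g : Good f -> Good g -> psiC (fun u v => (f u v + g u v)%C) = (psiC f + psiC g)%C.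
Proof.
  intros Gf Gg. unfold psiC.
  rewrite (RInt_ext (V := C_R_CompleteNormedModule) _
     (fun u => (RInt (V := C_R_CompleteNormedModule) (fun v => f u v) 0 (1 - u) + RInt (V := C_R_CompleteNormedModule) (fun v => g u v) 0 (1 - u))%C)).
  2: { intros; apply RInt_Cplus; apply good_ex_inner; auto. }
  apply RInt_Cplus; apply good_ex_outer; auto.
Qed.

Lemma psi_cmult c f : Good f -> psiC (fun u v => (c * f u v)%C) = (c * psiC f)%C.
Proof.
  intros Gf. unfold psiC.
  rewrite (RInt_ext (V := C_R_CompleteNormedModule) _
     (fun u => (c * RInt (V := C_R_CompleteNormedModule) (fun v => f u v) 0 (1 - u))%C)).
  2: { intros; apply RInt_Cmult_l; apply good_ex_inner; auto. }
  apply RInt_Cmult_l; apply good_ex_outer; auto.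
Qed.

Lemma psi_ext f g : (forall u v, f u v = g u v) -> psiC f = psiC g.
Proof.
  intros H. unfold psiC. apply (RInt_ext (V := C_R_CompleteNormedModule)). intros.
  apply (RInt_ext (V := C_R_CompleteNormedModule)). intros. apply H.
Qed.

Lemma tri_C f fu fv : Good f ->
  (forall x y, is_derive (V := C_R_NormedModule) (fun t => f t y) x (fu x y)) ->
  (forall x y, is_derive (V := C_R_NormedModule) (fun t => f x t) y (fv x y)) ->
  psiC (fun u v => (RtoC u * fu u v + RtoC v * fv u v + RtoC 2 * f u v)%C) = jC f.
Proof.
  intros G Du Dv.
  destruct (good_du f G) as [fu' [Gfu' Du']].
  destruct (good_dv f G) as [fv' [Gfv' Dv']].
  destruct (good_du fu' Gfu') as [fuu [Gfuu Duu]].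
  assert (E : forall u v, (RtoC u * fu u v + RtoC v * fv u v + RtoC 2 * f u v)%C =
                          (RtoC u * fu' u v + RtoC v * fv' u v + RtoC 2 * f u v)%C).
  { intros u v. rewrite (is_derive_C_unique _ _ _ _ (Du u v) (Du' u v)).
    rewrite (is_derive_C_unique _ _ _ _ (Dv u v) (Dv' u v)). reflexivity. }
  rewrite (psi_ext _ _ E).
  assert (GI : Good (fun u v => (RtoC u * fu' u v + RtoC v * fv' u v + RtoC 2 * f u v)%C)).
  { repeat constructor; auto. }
  rewrite (psi_comp _ GI), (j_comp _ G).
  apply injective_projections; simpl; unfold psiR.
  - rewrite <- (tri_real (fun u v => fst (f u v)) (fun u v => fst (fu' u v)) (fun u v => fst (fv' u v)) (fun u v => fst (fuu u v))).
    + apply RInt_ext. intros. apply RInt_ext. intros. simpl. ring.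
    + intros; apply is_derive_C_fst; apply Du'.
    + intros; apply is_derive_C_fst; apply Dv'.
    + intros; apply is_derive_C_fst; apply Duu.
    + intros; apply (good_cont f G).
    + intros; apply (good_cont fu' Gfu').
    + intros; apply (good_cont fv' Gfv').
    + intros; apply (good_cont fuu Gfuu).
  - rewrite <- (tri_real (fun u v => snd (f u v)) (fun u v => snd (fu' u v)) (fun u v => snd (fv' u v)) (fun u v => snd (fuu u v))).
    + apply RInt_ext. intros. apply RInt_ext. intros. simpl. ring.
    + intros; apply is_derive_C_snd; apply Du'.
    + intros; apply is_derive_C_snd; apply Dv'.
    + intros; apply is_derive_C_snd; apply Duu.
    + intros; apply (good_cont f G).
    + intros; apply (good_cont fu' Gfu').
    + intros; apply (good_cont fv' Gfv').
    + intros; apply (good_cont fuu Gfuu).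
Qed.


Definition xi (p : vec3) : C := (vx p / 2, vy p / 2).
Definition eta (p : vec3) : C := (vx p / 2, - (vy p / 2)).
Definition zc (p : vec3) : C := RtoC (vz p).
Definition dp (w : C) (k : Z) : C :=
  if (k <? 0)%Z then RtoC 0 else (Cpow w (Z.to_nat k) * RtoC (/ INR (fact (Z.to_nat k))))%C.
Definition wm (p q s : Z) (P : vec3) : C := (dp (xi P) p * dp (eta P) q * dp (zc P) s)%C.
Definition cf (p q s : Z) : C := (Cpow Ci (Z.to_nat p + Z.to_nat q) * RtoC ((-1) ^ (Z.to_nat s)))%C.
Definition Tm (n m : Z) (q : nat) (P : vec3) : C :=
  (cf (Z.of_nat q + m) (Z.of_nat q) (n - 2 * Z.of_nat q - m) *
   wm (Z.of_nat q + m) (Z.of_nat q) (n - 2 * Z.of_nat q - m) P)%C.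
Definition Rp (n m : Z) (P : vec3) : C := sum_n (fun q => Tm n m q P) (Z.to_nat n).
Definition Lad (n m : Z) (a P : vec3) : C :=
  (Ci * xi a * Rp (n - 1) (m - 1) P + Ci * eta a * Rp (n - 1) (m + 1) P
   - zc a * Rp (n - 1) m P)%C.

Lemma dp_neg w k : (k < 0)%Z -> dp w k = RtoC 0.
Proof. intros H. unfold dp. destruct (Z.ltb_spec k 0); [reflexivity|lia]. Qed.

Lemma dp_0 w : dp w 0 = RtoC 1.
Proof. unfold dp. simpl. apply injective_projections; Csimpl; field. Qed.

Lemma dp_pos w k : (0 <= k)%Z ->
  dp w k = (Cpow w (Z.to_nat k) * RtoC (/ INR (fact (Z.to_nat k))))%C.
Proof. intros H. unfold dp. destruct (Z.ltb_spec k 0); [lia|reflexivity]. Qed.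

Lemma is_derive_line (w0 c : C) x :
  is_derive (V := C_R_NormedModule) (fun t => (w0 + RtoC t * c)%C) x c.
Proof.
  apply (is_derive_C_ext (fun t => (w0 + RtoC t * c)%C) _ _ (RtoC 0 + (RtoC 1 * c + RtoC x * RtoC 0))%C).
  intros; reflexivity. Cring.
  apply is_derive_C_plus. apply is_derive_C_const.
  apply (is_derive_C_mult (fun t => RtoC t) (fun _ => c)). apply is_derive_C_RtoC. apply is_derive_C_const.
Qed.

Lemma dp_deriv (w0 c : C) (k : Z) x :
  is_derive (V := C_R_NormedModule) (fun t => dp (w0 + RtoC t * c)%C k) x
    (c * dp (w0 + RtoC x * c)%C (k - 1))%C.
Proof.
  destruct (Z_lt_le_dec k 1) as [Hk|Hk].
  - rewrite dp_neg by lia.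
    destruct (Z_lt_le_dec k 0) as [Hk0|Hk0].
    + apply (is_derive_C_ext (fun _ => RtoC 0) _ _ (RtoC 0)).
      intros; rewrite dp_neg by lia; reflexivity. Cring. apply is_derive_C_const.
    + assert (k = 0%Z) by lia. subst.
      apply (is_derive_C_ext (fun _ => RtoC 1) _ _ (RtoC 0)).
      intros; rewrite dp_0; reflexivity. Cring. apply is_derive_C_const.
  - rewrite dp_pos by lia.
    destruct (Z.to_nat k) as [|K] eqn:EK. lia.
    assert (Z.to_nat (k - 1) = K) by lia. rewrite H.
    apply (is_derive_C_ext (fun t => Cpow (w0 + RtoC t * c) (S K) * RtoC (/ INR (fact (S K))))%C _ _
      (RtoC (INR (S K)) * c * Cpow (w0 + RtoC x * c) (pred (S K)) * RtoC (/ INR (fact (S K))) +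
       Cpow (w0 + RtoC x * c) (S K) * RtoC 0)%C).
    intros t. rewrite dp_pos by lia. rewrite EK. reflexivity.
    2: { apply (is_derive_C_mult (fun t => Cpow (w0 + RtoC t * c) (S K)) (fun _ => RtoC (/ INR (fact (S K))))). apply is_derive_C_pow. apply is_derive_line. apply is_derive_C_const. }
    simpl pred. generalize (Cpow (w0 + RtoC x * c) K). intros z.
    assert (HF : INR (fact (S K)) = INR (S K) * INR (fact K)) by (rewrite <- mult_INR; reflexivity).
    rewrite HF.
    assert (INR (S K) <> 0) by (apply not_0_INR; lia).
    assert (INR (fact K) <> 0) by (apply INR_fact_neq_0).
    apply injective_projections; Csimpl; field; auto.
Qed.

Lemma sum_shift1 {G : AbelianMonoid} (f : nat -> G) K :
  sum_n f (S K) = plus (f O) (sum_n (fun j => f (S j)) K).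
Proof.
  induction K as [|K IH].
  - rewrite sum_Sn, !sum_O. reflexivity.
  - rewrite sum_Sn, IH, sum_Sn. rewrite plus_assoc. reflexivity.
Qed.

Lemma sum_ext_zero {G : AbelianMonoid} (f : nat -> G) K K' :
  (K <= K')%nat -> (forall j, (K < j)%nat -> f j = zero) -> sum_n f K' = sum_n f K.
Proof.
  intros HK Hz. induction K' as [|K' IH].
  - assert (K = 0%nat) by lia. subst; reflexivity.
  - destruct (Nat.eq_dec K (S K')) as [->|Hne]. reflexivity.
    rewrite sum_Sn, IH by lia. rewrite Hz by lia. apply plus_zero_r.
Qed.

Lemma plus_C (a b : C) : plus a b = Cplus a b.
Proof. reflexivity. Qed.
Lemma mult_C (a b : C) : mult a b = Cmult a b.
Proof. reflexivity. Qed.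
Lemma zero_C : (zero : C_AbelianGroup) = RtoC 0.
Proof. reflexivity. Qed.

Lemma line_xi P a t : xi (vadd P (vscal t a)) = (xi P + RtoC t * xi a)%C.
Proof. unfold xi, vadd, vscal, vx, vy, vz; simpl. apply injective_projections; Csimpl; field. Qed.
Lemma line_eta P a t : eta (vadd P (vscal t a)) = (eta P + RtoC t * eta a)%C.
Proof. unfold eta, vadd, vscal, vx, vy, vz; simpl. apply injective_projections; Csimpl; field. Qed.
Lemma line_zc P a t : zc (vadd P (vscal t a)) = (zc P + RtoC t * zc a)%C.
Proof. unfold zc, vadd, vscal, vx, vy, vz; simpl. apply injective_projections; Csimpl; field. Qed.

Lemma wm_deriv p q s P a x :
  is_derive (V := C_R_NormedModule) (fun t => wm p q s (vadd P (vscal t a))) x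
    (xi a * wm (p - 1) q s (vadd P (vscal x a)) + eta a * wm p (q - 1) s (vadd P (vscal x a))
     + zc a * wm p q (s - 1) (vadd P (vscal x a)))%C.
Proof.
  unfold wm. rewrite !line_xi, !line_eta, !line_zc.
  apply (is_derive_C_ext (fun t => dp (xi P + RtoC t * xi a) p * dp (eta P + RtoC t * eta a) q
            * dp (zc P + RtoC t * zc a) s)%C _ _
   ((xi a * dp (xi P + RtoC x * xi a) (p - 1) * dp (eta P + RtoC x * eta a) q +
     dp (xi P + RtoC x * xi a) p * (eta a * dp (eta P + RtoC x * eta a) (q-1)))
     * dp (zc P + RtoC x * zc a) s +
    dp (xi P + RtoC x * xi a) p * dp (eta P + RtoC x * eta a) q * (zc a * dp (zc P + RtoC x * zc a) (s - 1)))%C).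
  intros t. rewrite !line_xi, !line_eta, !line_zc. reflexivity.
  generalize (dp (xi P + RtoC x * xi a) (p - 1)) (dp (eta P + RtoC x * eta a) q)
    (dp (xi P + RtoC x * xi a) p) (dp (eta P + RtoC x * eta a) (q-1))
    (dp (zc P + RtoC x * zc a) s) (dp (zc P + RtoC x * zc a) (s - 1)). intros.
  Cring.
  apply (is_derive_C_mult (fun t => dp (xi P + RtoC t * xi a) p * dp (eta P + RtoC t * eta a) q)%C
     (fun t => dp (zc P + RtoC t * zc a) s)).
  apply (is_derive_C_mult (fun t => dp (xi P + RtoC t * xi a) p) (fun t => dp (eta P + RtoC t * eta a) q)).
  apply dp_deriv. apply dp_deriv. apply dp_deriv.
Qed.

Lemma wm_neg_p p q s P : (p < 0)%Z -> wm p q s P = RtoC 0.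
Proof. intros H. unfold wm. rewrite dp_neg by exact H. Cring. Qed.
Lemma wm_neg_q p q s P : (q < 0)%Z -> wm p q s P = RtoC 0.
Proof. intros H. unfold wm. rewrite (dp_neg _ q) by exact H. Cring. Qed.
Lemma wm_neg_s p q s P : (s < 0)%Z -> wm p q s P = RtoC 0.
Proof. intros H. unfold wm. rewrite (dp_neg _ s) by exact H. Cring. Qed.

Lemma cf_succ_p p q s : (0 <= p)%Z -> cf (p + 1) q s = (Ci * cf p q s)%C.
Proof.
  intros H. unfold cf. replace (Z.to_nat (p + 1)) with (S (Z.to_nat p)) by lia.
  simpl Nat.add. change (Cpow Ci (S (Z.to_nat p + Z.to_nat q))) with (Ci * Cpow Ci (Z.to_nat p + Z.to_nat q))%C.
  generalize (Cpow Ci (Z.to_nat p + Z.to_nat q)); intros; Cring.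
Qed.
Lemma cf_succ_q p q s : (0 <= q)%Z -> cf p (q + 1) s = (Ci * cf p q s)%C.
Proof.
  intros H. unfold cf. replace (Z.to_nat p + Z.to_nat (q + 1))%nat with (S (Z.to_nat p + Z.to_nat q)) by lia.
  change (Cpow Ci (S (Z.to_nat p + Z.to_nat q))) with (Ci * Cpow Ci (Z.to_nat p + Z.to_nat q))%C.
  generalize (Cpow Ci (Z.to_nat p + Z.to_nat q)); intros; Cring.
Qed.
Lemma cf_succ_s p q s : (0 <= s)%Z -> cf p q (s + 1) = (- cf p q s)%C.
Proof.
  intros H. unfold cf. replace (Z.to_nat (s + 1)) with (S (Z.to_nat s)) by lia.
  simpl pow. generalize (Cpow Ci (Z.to_nat p + Z.to_nat q)); intros; Cring.
Qed.

Lemma Tm_zero n m q P : (n < Z.of_nat q)%Z -> Tm n m q P = RtoC 0.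
Proof.
  intros H. unfold Tm.
  destruct (Z_lt_le_dec (Z.of_nat q + m) 0).
  - rewrite wm_neg_p by lia. Cring.
  - rewrite wm_neg_s by lia. Cring.
Qed.

Lemma Rp_ext n m P K : (Z.to_nat n <= K)%nat -> Rp n m P = sum_n (fun q => Tm n m q P) K.
Proof.
  intros HK. unfold Rp. symmetry. apply sum_ext_zero. exact HK.
  intros j Hj. apply Tm_zero. lia.
Qed.

Lemma sum_n_Cmult_l (a : C) (u : nat -> C) n :
  sum_n (fun k => (a * u k)%C) n = (a * sum_n u n)%C.
Proof. apply (sum_n_mult_l (K := C_Ring)). Qed.

Lemma sum_n_Cplus (u v : nat -> C) n :
  sum_n (fun k => (u k + v k)%C) n = (sum_n u n + sum_n v n)%C.
Proof. apply (sum_n_plus (G := C_AbelianMonoid)). Qed.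

Definition Dterm (n m : Z) (a P : vec3) (q : nat) : C :=
  let qz := Z.of_nat q in
  (cf (qz + m) qz (n - 2 * qz - m) *
   (xi a * wm (qz + m - 1) qz (n - 2 * qz - m) P
    + eta a * wm (qz + m) (qz - 1) (n - 2 * qz - m) P
    + zc a * wm (qz + m) qz (n - 2 * qz - m - 1) P))%C.

Lemma Dterm_zero n m a P q : (n < Z.of_nat q)%Z -> Dterm n m a P q = RtoC 0.
Proof.
  intros H. unfold Dterm.
  destruct (Z_lt_le_dec (Z.of_nat q + m) 0).
  - rewrite (wm_neg_p (Z.of_nat q + m - 1)) by lia.
    rewrite !(wm_neg_p (Z.of_nat q + m)) by lia. Cring.
  - rewrite (wm_neg_s (Z.of_nat q + m) _ (n - 2 * Z.of_nat q - m - 1)) by lia.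
    rewrite (wm_neg_s (Z.of_nat q + m - 1)) by lia.
    rewrite (wm_neg_s (Z.of_nat q + m)) by lia. Cring.
Qed.

Lemma lad_sum n m a P : (0 <= n)%Z ->
  sum_n (Dterm n m a P) (Z.to_nat n) = Lad n m a P.
Proof.
  intros Hn. set (K := Z.to_nat n).
  rewrite <- (sum_ext_zero (Dterm n m a P) K (S K)) by (try lia; intros; apply Dterm_zero; lia).
  unfold Lad.
  rewrite (Rp_ext (n - 1) (m - 1) P (S K)) by lia.
  rewrite (Rp_ext (n - 1) (m + 1) P K) by lia.
  rewrite (Rp_ext (n - 1) m P (S K)) by lia.
  set (A := fun q : nat => let qz := Z.of_nat q in
     (cf (qz + m) qz (n - 2 * qz - m) * (xi a * wm (qz + m - 1) qz (n - 2 * qz - m) P))%C).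
  set (B := fun q : nat => let qz := Z.of_nat q in
     (cf (qz + m) qz (n - 2 * qz - m) * (eta a * wm (qz + m) (qz - 1) (n - 2 * qz - m) P))%C).
  set (D := fun q : nat => let qz := Z.of_nat q in
     (cf (qz + m) qz (n - 2 * qz - m) * (zc a * wm (qz + m) qz (n - 2 * qz - m - 1) P))%C).
  rewrite (sum_n_ext _ (fun q => (A q + B q + D q)%C)).
  2: { intros q. unfold A, B, D, Dterm. simpl. 
       generalize (cf (Z.of_nat q + m) (Z.of_nat q) (n - 2 * Z.of_nat q - m)). intros. Cring. }
  rewrite !sum_n_Cplus.
  assert (EA : sum_n A (S K) = (Ci * xi a * sum_n (fun q => Tm (n - 1) (m - 1) q P) (S K))%C).
  { rewrite <- sum_n_Cmult_l. apply sum_n_ext. intros q. unfold A, Tm. cbv beta zeta.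
    replace (n - 1 - 2 * Z.of_nat q - (m - 1))%Z with (n - 2 * Z.of_nat q - m)%Z by lia.
    replace (Z.of_nat q + (m - 1))%Z with (Z.of_nat q + m - 1)%Z by lia.
    destruct (Z_lt_le_dec (Z.of_nat q + m - 1) 0).
    - rewrite wm_neg_p by lia. generalize (cf (Z.of_nat q + m) (Z.of_nat q) (n - 2 * Z.of_nat q - m)) (cf (Z.of_nat q + m - 1) (Z.of_nat q) (n - 2 * Z.of_nat q - m)). intros. Cring.
    - replace (Z.of_nat q + m)%Z with (Z.of_nat q + m - 1 + 1)%Z at 1 by lia.
      rewrite cf_succ_p by lia.
      generalize (cf (Z.of_nat q + m - 1) (Z.of_nat q) (n - 2 * Z.of_nat q - m)). intros. Cring. }
  assert (EB : sum_n B (S K) = (Ci * eta a * sum_n (fun q => Tm (n - 1) (m + 1) q P) K)%C).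
  { rewrite sum_shift1. unfold B at 1. simpl Z.of_nat. rewrite wm_neg_q by lia.
    rewrite <- sum_n_Cmult_l.
    rewrite (sum_n_ext _ (fun q => (Ci * eta a * Tm (n - 1) (m + 1) q P)%C)).
    Cring.
    intros q. unfold B, Tm. rewrite Nat2Z.inj_succ.
    replace (Z.succ (Z.of_nat q) + m)%Z with (Z.of_nat q + (m + 1))%Z by lia.
    replace (Z.succ (Z.of_nat q) - 1)%Z with (Z.of_nat q) by lia.
    replace (n - 2 * Z.succ (Z.of_nat q) - m)%Z with (n - 1 - 2 * Z.of_nat q - (m + 1))%Z by lia.
    unfold Z.succ. rewrite cf_succ_q by lia.
    generalize (cf (Z.of_nat q + (m + 1)) (Z.of_nat q) (n - 1 - 2 * Z.of_nat q - (m + 1))). intros. Cring. }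
  assert (ED : sum_n D (S K) = (- zc a * sum_n (fun q => Tm (n - 1) m q P) (S K))%C).
  { rewrite <- sum_n_Cmult_l. apply sum_n_ext. intros q. unfold D, Tm. cbv beta zeta.
    replace (n - 1 - 2 * Z.of_nat q - m)%Z with (n - 2 * Z.of_nat q - m - 1)%Z by lia.
    destruct (Z_lt_le_dec (n - 2 * Z.of_nat q - m - 1) 0).
    - rewrite wm_neg_s by lia. generalize (cf (Z.of_nat q + m) (Z.of_nat q) (n - 2 * Z.of_nat q - m)) (cf (Z.of_nat q + m) (Z.of_nat q) (n - 2 * Z.of_nat q - m - 1)). intros. Cring.
    - replace (n - 2 * Z.of_nat q - m)%Z with (n - 2 * Z.of_nat q - m - 1 + 1)%Z at 1 by lia.
      rewrite cf_succ_s by lia.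
      generalize (cf (Z.of_nat q + m) (Z.of_nat q) (n - 2 * Z.of_nat q - m - 1)). intros. Cring. }
  rewrite EA, EB, ED. Cring.
Qed.

Lemma Rp_deriv n m P a x : (0 <= n)%Z ->
  is_derive (V := C_R_NormedModule) (fun t => Rp n m (vadd P (vscal t a))) x
    (Lad n m a (vadd P (vscal x a))).
Proof.
  intros Hn. rewrite <- lad_sum by exact Hn. unfold Rp.
  apply (is_derive_sum_n (K := R_AbsRing) (V := C_R_NormedModule) (fun q t => Tm n m q (vadd P (vscal t a)))).
  intros q _. unfold Tm, Dterm. cbv beta zeta.
  set (qz := Z.of_nat q).
  apply (is_derive_C_ext (fun t => cf (qz + m) qz (n - 2 * qz - m) * wm (qz + m) qz (n - 2 * qz - m) (vadd P (vscal t a)))%C _ _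
    (RtoC 0 * wm (qz + m) qz (n - 2 * qz - m) (vadd P (vscal x a)) +
     cf (qz + m) qz (n - 2 * qz - m) * (xi a * wm (qz + m - 1) qz (n - 2 * qz - m) (vadd P (vscal x a)) +
        eta a * wm (qz + m) (qz - 1) (n - 2 * qz - m) (vadd P (vscal x a)) +
        zc a * wm (qz + m) qz (n - 2 * qz - m - 1) (vadd P (vscal x a))))%C).
  intros; reflexivity.
  generalize (cf (qz + m) qz (n - 2 * qz - m)) (wm (qz + m) qz (n - 2 * qz - m) (vadd P (vscal x a))). intros. Cring.
  apply (is_derive_C_mult (fun _ => cf (qz + m) qz (n - 2 * qz - m)) (fun t => wm (qz + m) qz (n - 2 * qz - m) (vadd P (vscal t a)))).
  apply is_derive_C_const. apply wm_deriv.
Qed.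

Lemma dp_mul w k : (w * dp w (k - 1))%C = (RtoC (IZR k) * dp w k)%C.
Proof.
  destruct (Z_lt_le_dec k 1) as [Hk|Hk].
  - rewrite (dp_neg w (k - 1)) by lia.
    destruct (Z_lt_le_dec k 0). rewrite dp_neg by lia. Cring.
    assert (k = 0%Z) by lia. subst. simpl. Cring.
  - rewrite !dp_pos by lia.
    destruct (Z.to_nat k) as [|K] eqn:EK. lia.
    replace (Z.to_nat (k - 1)) with K by lia.
    replace (IZR k) with (INR (S K)) by (rewrite INR_IZR_INZ; f_equal; lia).
    change (Cpow w (S K)) with (w * Cpow w K)%C.
    assert (HF : INR (fact (S K)) = INR (S K) * INR (fact K)) by (rewrite <- mult_INR; reflexivity).
    rewrite HF. generalize (Cpow w K). intros z.
    assert (INR (S K) <> 0) by (apply not_0_INR; lia).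
    assert (INR (fact K) <> 0) by (apply INR_fact_neq_0).
    apply injective_projections; Csimpl; field; auto.
Qed.

Lemma euler n m P : (0 <= n)%Z -> Lad n m P P = (RtoC (IZR n) * Rp n m P)%C.
Proof.
  intros Hn. rewrite <- lad_sum by exact Hn. unfold Rp.
  rewrite <- sum_n_Cmult_l. apply sum_n_ext. intros q.
  unfold Dterm, Tm, wm. cbv beta zeta. set (qz := Z.of_nat q).
  set (p := (qz + m)%Z). set (s := (n - 2 * qz - m)%Z).
  assert (E1 : (xi P * (dp (xi P) (p - 1) * dp (eta P) qz * dp (zc P) s))%C =
               (RtoC (IZR p) * (dp (xi P) p * dp (eta P) qz * dp (zc P) s))%C).
  { rewrite <- (Cmult_assoc (dp (xi P) (p - 1))), Cmult_assoc, dp_mul. Cring. }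
  assert (E2 : (eta P * (dp (xi P) p * dp (eta P) (qz - 1) * dp (zc P) s))%C =
               (RtoC (IZR qz) * (dp (xi P) p * dp (eta P) qz * dp (zc P) s))%C).
  { generalize (dp_mul (eta P) qz). generalize (dp (eta P) (qz - 1)) (dp (eta P) qz). intros a b H.
    transitivity (dp (xi P) p * (eta P * a) * dp (zc P) s)%C. Cring. rewrite H. Cring. }
  assert (E3 : (zc P * (dp (xi P) p * dp (eta P) qz * dp (zc P) (s - 1)))%C =
               (RtoC (IZR s) * (dp (xi P) p * dp (eta P) qz * dp (zc P) s))%C).
  { generalize (dp_mul (zc P) s). generalize (dp (zc P) (s - 1)) (dp (zc P) s). intros a b H.
    transitivity (dp (xi P) p * dp (eta P) qz * (zc P * a))%C. Cring. rewrite H. Cring. }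
  rewrite E1, E2, E3.
  assert (IZR n = IZR p + IZR qz + IZR s) by (rewrite <- !plus_IZR; f_equal; unfold p, s; lia).
  rewrite H. generalize (cf p qz s) (dp (xi P) p * dp (eta P) qz * dp (zc P) s)%C. intros. Cring.
Qed.


Definition hp (a : Z) (mu : R) : R :=
  if (a <? 0)%Z then 0 else mu ^ (Z.to_nat a) / INR (fact (Z.to_nat a)).

Lemma hp_neg a mu : (a < 0)%Z -> hp a mu = 0.
Proof. intros H. unfold hp. destruct (Z.ltb_spec a 0); [reflexivity|lia]. Qed.
Lemma hp_pos a mu : (0 <= a)%Z -> hp a mu = mu ^ (Z.to_nat a) / INR (fact (Z.to_nat a)).
Proof. intros H. unfold hp. destruct (Z.ltb_spec a 0); [lia|reflexivity]. Qed.

Lemma is_derive_R_ext (f g : R -> R) x l l' : (forall t, f t = g t) -> l = l' ->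
  is_derive f x l -> is_derive g x l'.
Proof. intros H <-. apply is_derive_ext. exact H. Qed.

Lemma is_derive_R_const (c : R) x : is_derive (fun _ => c) x 0.
Proof. apply (is_derive_const (K := R_AbsRing) (V := R_NormedModule)). Qed.

Lemma hp_deriv a mu : is_derive (hp a) mu (hp (a - 1) mu).
Proof.
  destruct (Z_lt_le_dec a 1) as [Ha|Ha].
  - rewrite hp_neg by lia.
    destruct (Z_lt_le_dec a 0).
    + apply (is_derive_R_ext (fun _ => 0) _ _ 0). intros t; rewrite (hp_neg a t) by lia; reflexivity.
      reflexivity. apply is_derive_R_const.
    + assert (a = 0%Z) by lia. subst.
      apply (is_derive_R_ext (fun _ => 1) _ _ 0). intros t; rewrite (hp_pos 0 t) by lia; simpl; field.
      reflexivity. apply is_derive_R_const.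
  - rewrite hp_pos by lia.
    destruct (Z.to_nat a) as [|K] eqn:EK. lia.
    replace (Z.to_nat (a - 1)) with K by lia.
    apply (is_derive_R_ext (fun t => / INR (fact (S K)) * t ^ S K) _ _ (/ INR (fact (S K)) * (INR (S K) * 1 * mu ^ pred (S K)))).
    intros t; rewrite (hp_pos a t) by lia; rewrite EK; unfold Rdiv; apply Rmult_comm.
    + simpl pred. rewrite (fact_simpl K), mult_INR.
      assert (INR (S K) <> 0) by (apply not_0_INR; lia).
      assert (INR (fact K) <> 0) by apply INR_fact_neq_0.
      apply eqR; field; auto.
    + apply (is_derive_scal (fun t => t ^ S K)). apply is_derive_pow. apply (is_derive_id (K := R_AbsRing)).
Qed.

Lemma sum_R_ext (f g : nat -> R) K : (forall k, f k = g k) -> sum_n f K = sum_n g K.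
Proof. intros; apply sum_n_ext; auto. Qed.
Lemma sum_R_plus (f g : nat -> R) K : sum_n (fun k => f k + g k) K = sum_n f K + sum_n g K.
Proof. apply (sum_n_plus (G := R_AbelianMonoid)). Qed.
Lemma sum_R_zero (f : nat -> R) K : (forall k, (k <= K)%nat -> f k = 0) -> sum_n f K = 0.
Proof.
  intros H. rewrite (sum_n_ext_loc _ (fun _ => 0)) by auto.
  rewrite sum_n_const. apply eqR; ring.
Qed.
Lemma sum_R_one (f : nat -> R) K k0 : (k0 <= K)%nat ->
  (forall k, (k <= K)%nat -> k <> k0 -> f k = 0) -> sum_n f K = f k0.
Proof.
  intros Hk H. induction K as [|K IH].
  - assert (k0 = 0%nat) by lia. subst. apply sum_O.
  - rewrite sum_Sn. destruct (Nat.eq_dec k0 (S K)) as [->|Hne].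
    + rewrite (sum_R_zero f K). change (0 + f (S K) = f (S K)). ring.
      intros; apply H; lia.
    + rewrite IH by (try lia; intros; apply H; lia). rewrite (H (S K)) by lia. change (f k0 + 0 = f k0). ring.
Qed.
Lemma sum_R_shift (A A' : nat -> R) K :
  A O = 0 -> A' K = 0 -> (forall j, A (S j) = A' j) -> sum_n A K = sum_n A' K.
Proof.
  intros H0 HK HS. destruct K as [|K].
  - rewrite !sum_O. congruence.
  - rewrite sum_shift1, sum_Sn, HK, H0. rewrite (sum_R_ext _ A' K HS).
    change (0 + sum_n A' K = sum_n A' K + 0). ring.
Qed.

Definition Bc (nn k : nat) : R := Binomial.C nn k * (-1) ^ (nn - k) * INR (fact (2 * k)).
Definition Bf (nn N : nat) (mu : R) : R :=
  sum_n (fun k => Bc nn k * hp (Z.of_nat (2 * k) - Z.of_nat N) mu) nn.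

Lemma Bf_deriv nn N mu : is_derive (Bf nn N) mu (Bf nn (S N) mu).
Proof.
  unfold Bf. apply (is_derive_sum_n (K := R_AbsRing) (V := R_NormedModule) (fun k y => Bc nn k * hp (Z.of_nat (2 * k) - Z.of_nat N) y)).
  intros k _. replace (Z.of_nat (2 * k) - Z.of_nat (S N))%Z with (Z.of_nat (2 * k) - Z.of_nat N - 1)%Z by lia.
  apply is_derive_scal. apply hp_deriv.
Qed.

Lemma Bf_0 nn mu : Bf nn 0 mu = (mu ^ 2 - 1) ^ nn.
Proof.
  unfold Rminus. rewrite binomial, <- sum_n_Reals. unfold Bf. apply sum_R_ext. intros k.
  unfold Bc. rewrite hp_pos by lia. replace (Z.to_nat (Z.of_nat (2 * k) - Z.of_nat 0)) with (2 * k)%nat by lia.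
  rewrite <- pow_mult.
  assert (INR (fact (2 * k)) <> 0) by apply INR_fact_neq_0. replace (- (1)) with (-1) by ring. generalize ((-1) ^ (nn - k)) (mu ^ (2 * k)). intros. apply eqR; field; auto.
Qed.

Lemma Derive_n_F nn N mu : Derive_n (fun t => (t ^ 2 - 1) ^ nn) N mu = Bf nn N mu.
Proof.
  revert mu. induction N as [|N IH]; intros mu.
  - simpl. symmetry. apply Bf_0.
  - simpl. rewrite (Derive_ext _ (Bf nn N)) by apply IH.
    apply is_derive_unique. apply Bf_deriv.
Qed.

Definition cS (nn M j : nat) : R :=
  2 ^ nn * INR (fact nn) * INR (fact (nn + M)) /
  (2 ^ M * 4 ^ j * INR (fact (M + j)) * INR (fact j)).
Definition Sf (nn M : nat) (mu : R) : R :=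
  sum_n (fun j => cS nn M j * (mu ^ 2 - 1) ^ j * hp (Z.of_nat nn - Z.of_nat M - 2 * Z.of_nat j) mu) nn.

Lemma hp_mul a mu : mu * hp a mu = IZR (a + 1) * hp (a + 1) mu.
Proof.
  destruct (Z_lt_le_dec a 0).
  - rewrite hp_neg by lia. destruct (Z_lt_le_dec (a + 1) 0).
    + rewrite hp_neg by lia. ring.
    + replace (a + 1)%Z with 0%Z by lia. simpl. ring.
  - rewrite !hp_pos by lia. replace (Z.to_nat (a + 1)) with (S (Z.to_nat a)) by lia.
    replace (IZR (a + 1)) with (INR (S (Z.to_nat a))) by (rewrite INR_IZR_INZ; f_equal; lia).
    rewrite fact_simpl, mult_INR. simpl pow.
    assert (INR (S (Z.to_nat a)) <> 0) by (apply not_0_INR; lia).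
    assert (INR (fact (Z.to_nat a)) <> 0) by apply INR_fact_neq_0.
    field; auto.
Qed.

Lemma cS_rec nn M j :
  cS nn M j + cS nn M (S j) * INR (S j) * 2 * (INR nn - INR M - 2 * INR j - 1) = cS nn (S M) j.
Proof.
  unfold cS.
  replace (M + S j)%nat with (S (M + j)) by lia.
  replace (S M + j)%nat with (S (M + j)) by lia.
  replace (nn + S M)%nat with (S (nn + M)) by lia.
  rewrite !fact_simpl, !mult_INR. simpl pow.
  rewrite !S_INR, !plus_INR.
  assert (INR (fact (M + j)) <> 0) by apply INR_fact_neq_0.
  assert (INR (fact j) <> 0) by apply INR_fact_neq_0.
  assert (0 < 2 ^ M) by (apply pow_lt; lra).
  assert (0 < 4 ^ j) by (apply pow_lt; lra).
  assert (0 <= INR M) by apply pos_INR.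
  assert (0 <= INR j) by apply pos_INR.
  field. repeat split; try lra.
Qed.

Lemma Sf_deriv nn M mu : is_derive (Sf nn M) mu (Sf nn (S M) mu).
Proof.
  unfold Sf.
  set (s := fun j : nat => (Z.of_nat nn - Z.of_nat M - 2 * Z.of_nat j)%Z).
  apply (is_derive_R_ext (fun y => sum_n (fun j => cS nn M j * (y ^ 2 - 1) ^ j * hp (s j) y) nn) _ _ (sum_n (fun j => cS nn M j * (INR j * (2 * mu) * (mu ^ 2 - 1) ^ pred j) * hp (s j) mu
        + cS nn M j * (mu ^ 2 - 1) ^ j * hp (s j - 1) mu) nn)).
  - intros; reflexivity.
  - rewrite sum_R_plus.
    set (A' := fun j : nat => cS nn M (S j) * INR (S j) * 2 * IZR (s j - 1) * ((mu ^ 2 - 1) ^ j * hp (s j - 1) mu)).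
    rewrite (sum_R_shift _ A').
    + rewrite <- sum_R_plus. apply sum_R_ext. intros j.
      replace (Z.of_nat nn - Z.of_nat (S M) - 2 * Z.of_nat j)%Z with (s j - 1)%Z by (unfold s; lia).
      rewrite <- cS_rec. unfold A'.
      replace (IZR (s j - 1)) with (INR nn - INR M - 2 * INR j - 1).
      ring. unfold s. rewrite !minus_IZR, mult_IZR, <- !INR_IZR_INZ. reflexivity.
    + simpl. ring.
    + unfold A'. rewrite hp_neg by (unfold s; lia). ring.
    + intros j. unfold A'. simpl pred.
      replace (s j - 1)%Z with (s (S j) + 1)%Z by (unfold s; lia).
      transitivity (cS nn M (S j) * INR (S j) * 2 * (mu ^ 2 - 1) ^ j * (mu * hp (s (S j)) mu)). apply eqR; ring. rewrite hp_mul. apply eqR; ring.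
  - apply (is_derive_sum_n (K := R_AbsRing) (V := R_NormedModule) (fun j y => cS nn M j * (y ^ 2 - 1) ^ j * hp (s j) y)).
    intros j _.
    apply (is_derive_R_ext (fun y => cS nn M j * ((y ^ 2 - 1) ^ j * hp (s j) y)) _ _
      (cS nn M j * ((INR j * (2 * mu) * (mu ^ 2 - 1) ^ pred j) * hp (s j) mu + (mu ^ 2 - 1) ^ j * hp (s j - 1) mu))).
    intros; ring. apply eqR; ring.
    apply is_derive_scal. apply Derive.is_derive_mult.
    + auto_derive. auto. replace (mu * (mu * 1) + - (1)) with (mu ^ 2 - 1) by ring. generalize ((mu ^ 2 - 1) ^ Init.Nat.pred j). intros. apply eqR. simpl. ring.
    + apply hp_deriv.
Qed.

Lemma hp_at0_0 : hp 0 0 = 1.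
Proof. rewrite hp_pos by lia. simpl. field. Qed.
Lemma hp_at0_ne a : a <> 0%Z -> hp a 0 = 0.
Proof.
  intros H. destruct (Z_lt_le_dec a 0). apply hp_neg; auto.
  rewrite hp_pos by lia. destruct (Z.to_nat a) as [|K] eqn:E. lia.
  rewrite pow_ne_zero by lia. unfold Rdiv. ring.
Qed.

Lemma Bf_Sf_0 nn M : (M <= nn)%nat -> Bf nn (nn + M) 0 = Sf nn M 0.
Proof.
  intros HM. unfold Bf, Sf.
  destruct (Nat.Even_or_Odd (nn + M)) as [[k0 Hk]|[k0 Hk]].
  - set (j0 := (nn - k0)%nat).
    rewrite (sum_R_one _ nn k0) by (try lia; intros k _ Hne; rewrite hp_at0_ne by lia; ring).
    rewrite (sum_R_one _ nn j0) by (try lia; intros k _ Hne; rewrite hp_at0_ne by lia; ring).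
    replace (Z.of_nat (2 * k0) - Z.of_nat (nn + M))%Z with 0%Z by lia.
    replace (Z.of_nat nn - Z.of_nat M - 2 * Z.of_nat j0)%Z with 0%Z by lia.
    rewrite hp_at0_0. unfold Bc, cS, Binomial.C.
    replace (M + j0)%nat with k0 by lia. replace (nn - k0)%nat with j0 by lia.
    replace (2 * k0)%nat with (nn + M)%nat by lia.
    replace (0 ^ 2 - 1) with (-1) by ring.
    replace (2 ^ M * 4 ^ j0) with (2 ^ nn).
    2: { replace 4 with (2 ^ 2) by ring. rewrite <- pow_mult, <- pow_add. f_equal. lia. }
    assert (INR (fact k0) <> 0) by apply INR_fact_neq_0.
    assert (INR (fact j0) <> 0) by apply INR_fact_neq_0.
    assert (0 < 2 ^ nn) by (apply pow_lt; lra).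
    generalize ((-1) ^ j0). intros. field. repeat split; lra.
  - rewrite sum_R_zero. rewrite sum_R_zero. reflexivity.
    + intros k _. rewrite hp_at0_ne by lia. ring.
    + intros k _. rewrite hp_at0_ne by lia. ring.
Qed.

Lemma Bf_Sf_desc nn d : forall M, (M + d = nn + 1)%nat -> forall mu, Bf nn (nn + M) mu = Sf nn M mu.
Proof.
  induction d as [|d IH]; intros M HM mu.
  - unfold Bf, Sf. rewrite sum_R_zero. rewrite sum_R_zero. reflexivity.
    + intros k _. rewrite hp_neg by lia. ring.
    + intros k Hk. rewrite hp_neg by lia. ring.
  - assert (HD : forall t, is_derive (fun x => Bf nn (nn + M) x - Sf nn M x) t 0).
    { intros t. apply (is_derive_R_ext (fun x => Bf nn (nn + M) x - Sf nn M x) _ _ (Bf nn (S (nn + M)) t - Sf nn (S M) t)).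
      intros; reflexivity.
      replace (S (nn + M)) with (nn + S M)%nat by lia. rewrite (IH (S M)) by lia. apply eqR; ring.
      apply (is_derive_minus (K := R_AbsRing) (V := R_NormedModule)). apply Bf_deriv. apply Sf_deriv. }
    assert (H0 : Bf nn (nn + M) 0 - Sf nn M 0 = 0) by (rewrite Bf_Sf_0 by lia; ring).
    assert (E : Bf nn (nn + M) mu - Sf nn M mu = 0).
    { destruct (Rtotal_order mu 0) as [Hl|[He|Hg]].
      - rewrite <- H0. apply (eq_is_derive (V := R_NormedModule) (fun x => Bf nn (nn + M) x - Sf nn M x)); auto.
      - subst; auto.
      - rewrite <- H0. symmetry. apply (eq_is_derive (V := R_NormedModule) (fun x => Bf nn (nn + M) x - Sf nn M x)); auto. }
    lra.
Qed.

Lemma DnF_formula nn M mu : (M <= nn)%nat ->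
  Derive_n (fun t => (t ^ 2 - 1) ^ nn) (M + nn) mu = Sf nn M mu.
Proof.
  intros HM. rewrite Derive_n_F. rewrite Nat.add_comm. apply (Bf_Sf_desc nn (nn + 1 - M)). lia.
Qed.


Lemma pm1 n : (-1) ^ n = 1 \/ (-1) ^ n = -1.
Proof.
  induction n as [|n [H|H]]. left; simpl; ring.
  right; simpl; rewrite H; ring. left; simpl; rewrite H; ring.
Qed.

Lemma pow_div_R x y n : y <> 0 -> (x / y) ^ n = x ^ n / y ^ n.
Proof. intros H. unfold Rdiv. rewrite Rpow_mult_distr, pow_inv; auto. Qed.

Lemma term_core (nn M j sS : nat) (W E' : C) (rho r z : R) :
  r <> 0 -> (RtoC rho * E')%C = (RtoC 2 * W)%C -> rho ^ 2 + z ^ 2 = r ^ 2 ->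
  nn = (M + 2 * j + sS)%nat ->
  (Cdiv (RtoC ((-1) ^ nn) * Cpow Ci M) (RtoC (INR (fact (nn + M)))) *
   (RtoC (r ^ nn * ((-1) ^ M * (rho / r) ^ M / (2 ^ nn * INR (fact nn)) *
      (cS nn M j * ((z / r) ^ 2 - 1) ^ j * ((z / r) ^ sS / INR (fact sS))))) * Cpow E' M))%C
  = (Cpow Ci (j + M + j) * RtoC ((-1) ^ sS) *
     (Cpow W M * RtoC ((rho ^ 2 / 4) ^ j) * RtoC (/ INR (fact (j + M))) * RtoC (/ INR (fact j)) *
      (Cpow (RtoC z) sS * RtoC (/ INR (fact sS)))))%C.
Proof.
  intros Hr HW Hrz Hnn.
  assert (Hf : forall k, INR (fact k) <> 0) by (intros; apply INR_fact_neq_0).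
  assert (Hci : Cpow Ci (j + M + j) = (Cpow Ci M * RtoC ((-1) ^ j))%C).
  { replace (j + M + j)%nat with (M + 2 * j)%nat by lia. rewrite Cpow_add_r, Cpow_mult_r.
    replace (Cpow Ci 2) with (RtoC (-1)) by (simpl; Cring). rewrite <- RtoC_pow. reflexivity. }
  rewrite Hci.
  unfold Cdiv. rewrite <- RtoC_inv by apply Hf.
  replace ((rho / r) ^ M) with (rho ^ M * (/ r) ^ M) by (symmetry; apply Rpow_mult_distr).
  replace (r ^ nn * ((-1) ^ M * (rho ^ M * (/ r) ^ M) / (2 ^ nn * INR (fact nn)) *
      (cS nn M j * ((z / r) ^ 2 - 1) ^ j * ((z / r) ^ sS / INR (fact sS)))))
    with ((r ^ nn * ((-1) ^ M * (/ r) ^ M / (2 ^ nn * INR (fact nn)) *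
      (cS nn M j * ((z / r) ^ 2 - 1) ^ j * ((z / r) ^ sS / INR (fact sS))))) * rho ^ M)
    by (unfold Rdiv; ring).
  rewrite (RtoC_mult _ (rho ^ M)), (RtoC_pow rho M).
  transitivity (RtoC ((-1) ^ nn) * Cpow Ci M * RtoC (/ INR (fact (nn + M))) *
    RtoC (r ^ nn * ((-1) ^ M * (/ r) ^ M / (2 ^ nn * INR (fact nn)) *
      (cS nn M j * ((z / r) ^ 2 - 1) ^ j * ((z / r) ^ sS / INR (fact sS))))) *
    Cpow (RtoC rho * E') M)%C.
  { rewrite Cpow_mult_l. ring. }
  rewrite HW, Cpow_mult_l, <- (RtoC_pow 2).
  set (KK := (Cpow Ci M * Cpow W M)%C).
  transitivity (RtoC ((-1) ^ nn * / INR (fact (nn + M)) *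
    (r ^ nn * ((-1) ^ M * (/ r) ^ M / (2 ^ nn * INR (fact nn)) *
      (cS nn M j * ((z / r) ^ 2 - 1) ^ j * ((z / r) ^ sS / INR (fact sS))))) * 2 ^ M) * KK)%C.
  { unfold KK. rewrite !RtoC_mult. ring. }
  transitivity (RtoC ((-1) ^ j * (-1) ^ sS * ((rho ^ 2 / 4) ^ j) * / INR (fact (j + M)) * / INR (fact j) *
      (z ^ sS * / INR (fact sS))) * KK)%C.
  2: { unfold KK. rewrite !RtoC_mult, (RtoC_pow z sS). ring. }
  f_equal. f_equal.
  assert (Hr2 : (z / r) ^ 2 - 1 = - (rho ^ 2 / r ^ 2)).
  { field_simplify_eq; auto. lra. }
  rewrite Hr2.
  replace (- (rho ^ 2 / r ^ 2)) with ((-1) * (rho ^ 2 / r ^ 2)) by ring.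
  rewrite Rpow_mult_distr, !pow_div_R by (try apply pow_nonzero; auto; lra).
  rewrite pow_inv by auto.
  assert (E1 : (-1) ^ nn = (-1) ^ M * (-1) ^ sS).
  { rewrite Hnn, !pow_add, pow_1_even. ring. }
  assert (E2 : r ^ nn = r ^ M * (r ^ 2) ^ j * r ^ sS).
  { rewrite Hnn, !pow_add, pow_mult. ring. }
  assert (E3 : 2 ^ nn = 2 ^ M * 4 ^ j * 2 ^ sS).
  { rewrite Hnn, !pow_add, pow_mult. replace (2 ^ 2) with 4 by ring. ring. }
  unfold cS. rewrite E1, E2, E3.
  replace (M + j)%nat with (j + M)%nat by lia.
  assert (HrM : r ^ M <> 0) by (apply pow_nonzero; auto).
  assert (Hr2j : (r ^ 2) ^ j <> 0) by (apply pow_nonzero, pow_nonzero; auto).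
  assert (HrS : r ^ sS <> 0) by (apply pow_nonzero; auto).
  assert (H2M : 2 ^ M <> 0) by (apply pow_nonzero; lra).
  assert (H4j : 4 ^ j <> 0) by (apply pow_nonzero; lra).
  assert (H2S : 2 ^ sS <> 0) by (apply pow_nonzero; lra).
  generalize (Hf (nn + M)%nat) (Hf nn) (Hf (j + M)%nat) (Hf j) (Hf sS).
  generalize (INR (fact (nn + M))) (INR (fact nn)) (INR (fact (j + M))) (INR (fact j)) (INR (fact sS)).
  intros f1 f2 f3 f4 f5 F1 F2 F3 F4 F5.
  revert HrM Hr2j HrS H2M H4j H2S.
  generalize (r ^ M) ((r ^ 2) ^ j) (r ^ sS) (2 ^ M) (4 ^ j) (2 ^ sS) ((rho ^ 2) ^ j) (z ^ sS) ((-1) ^ j) ((-1) ^ sS).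
  intros a1 a2 a3 a4 a5 a6 a7 a8 a9 a10 A1 A2 A3 A4 A5 A6.
  destruct (pm1 M) as [-> | ->]; field; repeat split; auto.
Qed.

Lemma xi_eta_prod p : (xi p * eta p)%C = RtoC ((vx p ^ 2 + vy p ^ 2) / 4).
Proof. unfold xi, eta. apply injective_projections; Csimpl; field. Qed.

Lemma Tm_bridge_pos n m j p : (0 <= m)%Z -> (0 <= n - 2 * Z.of_nat j - m)%Z ->
  Tm n m j p = (Cpow Ci (j + Z.to_nat m + j) * RtoC ((-1) ^ Z.to_nat (n - 2 * Z.of_nat j - m)) *
     (Cpow (xi p) (Z.to_nat m) * RtoC (((vx p ^ 2 + vy p ^ 2) / 4) ^ j) *
      RtoC (/ INR (fact (j + Z.to_nat m))) * RtoC (/ INR (fact j)) *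
      (Cpow (RtoC (vz p)) (Z.to_nat (n - 2 * Z.of_nat j - m)) *
       RtoC (/ INR (fact (Z.to_nat (n - 2 * Z.of_nat j - m)))))))%C.
Proof.
  intros Hm Hs. unfold Tm, cf, wm.
  rewrite !dp_pos by lia.
  replace (Z.to_nat (Z.of_nat j + m)) with (j + Z.to_nat m)%nat by lia.
  rewrite !Nat2Z.id.
  rewrite (Cpow_add_r (xi p) j).
  rewrite (RtoC_pow _ j), <- xi_eta_prod, Cpow_mult_l.
  unfold zc. ring.
Qed.

Lemma Tm_bridge_neg n m j p : (m < 0)%Z -> (0 <= n - 2 * Z.of_nat j + m)%Z ->
  Tm n m (j + Z.to_nat (- m)) p =
    (Cpow Ci (j + Z.to_nat (- m) + j) * RtoC ((-1) ^ Z.to_nat (n - 2 * Z.of_nat j + m)) *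
     (Cpow (eta p) (Z.to_nat (- m)) * RtoC (((vx p ^ 2 + vy p ^ 2) / 4) ^ j) *
      RtoC (/ INR (fact (j + Z.to_nat (- m)))) * RtoC (/ INR (fact j)) *
      (Cpow (RtoC (vz p)) (Z.to_nat (n - 2 * Z.of_nat j + m)) *
       RtoC (/ INR (fact (Z.to_nat (n - 2 * Z.of_nat j + m)))))))%C.
Proof.
  intros Hm Hs. unfold Tm, cf, wm.
  rewrite !dp_pos by lia.
  replace (Z.to_nat (Z.of_nat (j + Z.to_nat (- m)) + m)) with j by lia.
  replace (Z.to_nat (Z.of_nat (j + Z.to_nat (- m)))) with (j + Z.to_nat (- m))%nat by lia.
  replace (n - 2 * Z.of_nat (j + Z.to_nat (- m)) - m)%Z with (n - 2 * Z.of_nat j + m)%Z by lia.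
  replace (j + (j + Z.to_nat (- m)))%nat with (j + Z.to_nat (- m) + j)%nat by lia.
  rewrite (Cpow_add_r (eta p)).
  rewrite (RtoC_pow _ j), <- xi_eta_prod, Cpow_mult_l.
  unfold zc. ring.
Qed.

Lemma RtoC_plus' x y : RtoC (x + y) = (RtoC x + RtoC y)%C.
Proof. Cring. Qed.

Lemma sum_pull (c E : C) (B A : R) (g : nat -> R) K :
  (c * (RtoC (B * (A * sum_n g K)) * E))%C = sum_n (fun j => c * (RtoC (B * (A * g j)) * E))%C K.
Proof.
  induction K as [|K IH].
  - rewrite !sum_O. reflexivity.
  - rewrite !sum_Sn. change (plus (sum_n g K) (g (S K))) with (sum_n g K + g (S K)).
    rewrite plus_C, <- IH.
    replace (B * (A * (sum_n g K + g (S K)))) with (B * (A * sum_n g K) + B * (A * g (S K))) by ring.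
    rewrite RtoC_plus'. ring.
Qed.

Lemma sum_shiftM {G : AbelianMonoid} (f : nat -> G) K M :
  (forall q, (q < M)%nat -> f q = zero) -> sum_n f (K + M) = sum_n (fun j => f (j + M)%nat) K.
Proof.
  revert f. induction M as [|M IH]; intros f H.
  - rewrite Nat.add_0_r. apply sum_n_ext. intros; rewrite Nat.add_0_r; reflexivity.
  - replace (K + S M)%nat with (S (K + M)) by lia. rewrite sum_shift1.
    rewrite H by lia. rewrite plus_zero_l.
    rewrite (IH (fun j => f (S j))). apply sum_n_ext. intros; f_equal; lia.
    intros; apply H; lia.
Qed.

Lemma rho_zero_xy p : sqrt (vx p ^ 2 + vy p ^ 2) = 0 -> vx p = 0 /\ vy p = 0.
Proof.
  intros H. apply sqrt_eq_0 in H. 2: nra. split; nra.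
Qed.

Lemma eiphi_xi p : (RtoC (sqrt (vx p ^ 2 + vy p ^ 2)) * sph_eiphi p)%C = (RtoC 2 * xi p)%C.
Proof.
  unfold sph_eiphi, xi. destruct (Req_EM_T (sqrt (vx p ^ 2 + vy p ^ 2)) 0) as [H|H].
  - destruct (rho_zero_xy p H) as [Hx Hy]. rewrite H, Hx, Hy. apply injective_projections; Csimpl; field.
  - apply injective_projections; Csimpl; field; auto.
Qed.

Lemma eiphi_eta p : (RtoC (sqrt (vx p ^ 2 + vy p ^ 2)) * Cinv (sph_eiphi p))%C = (RtoC 2 * eta p)%C.
Proof.
  unfold sph_eiphi, eta. destruct (Req_EM_T (sqrt (vx p ^ 2 + vy p ^ 2)) 0) as [H|H].
  - destruct (rho_zero_xy p H) as [Hx Hy]. rewrite H, Hx, Hy. apply injective_projections; Csimpl; field.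
  - set (rho := sqrt (vx p ^ 2 + vy p ^ 2)) in *.
    assert (Hr2 : rho ^ 2 = vx p ^ 2 + vy p ^ 2) by (apply pow2_sqrt; nra).
    assert (H1 : (vx p / rho) ^ 2 + (vy p / rho) ^ 2 = 1).
    { field_simplify_eq; auto. }
    unfold Cinv. cbn [fst snd]. rewrite H1.
    apply injective_projections; Csimpl; field; auto.
Qed.

Lemma eqC (a b : C) : a = b -> a = b.
Proof. auto. Qed.

Lemma sum_C_zero K : sum_n (fun _ => RtoC 0) K = RtoC 0.
Proof.
  induction K as [|K IH]. apply sum_O. rewrite sum_Sn, IH. rewrite plus_C. Cring.
Qed.

Lemma dp_zero k : k <> 0%Z -> dp (RtoC 0) k = RtoC 0.
Proof.
  intros H. destruct (Z_lt_le_dec k 0). apply dp_neg; auto.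
  rewrite dp_pos by lia. destruct (Z.to_nat k) as [|K] eqn:E. lia.
  change (Cpow (RtoC 0) (S K)) with (RtoC 0 * Cpow (RtoC 0) K)%C. ring.
Qed.

Lemma sph_r_zero p : sph_r p = 0 -> vx p = 0 /\ vy p = 0 /\ vz p = 0.
Proof.
  unfold sph_r. intros H. apply sqrt_eq_0 in H. 2: nra. repeat split; nra.
Qed.

Lemma Rp_origin n m p : (1 <= n)%Z -> sph_r p = 0 -> Rp n m p = RtoC 0.
Proof.
  intros Hn Hr. destruct (sph_r_zero p Hr) as [Hx [Hy Hz]].
  assert (Xi : xi p = RtoC 0) by (unfold xi; rewrite Hx, Hy; apply injective_projections; Csimpl; field).
  assert (Et : eta p = RtoC 0) by (unfold eta; rewrite Hx, Hy; apply injective_projections; Csimpl; field).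
  assert (Zc : zc p = RtoC 0) by (unfold zc; rewrite Hz; reflexivity).
  unfold Rp. rewrite <- (sum_C_zero (Z.to_nat n)). apply sum_n_ext. intros q.
  apply eqC. unfold Tm, wm. rewrite Xi, Et, Zc.
  destruct (Z.eq_dec (Z.of_nat q + m) 0) as [E1|E1].
  - destruct (Z.eq_dec (Z.of_nat q) 0) as [E2|E2].
    + rewrite (dp_zero (n - 2 * Z.of_nat q - m)) by lia. ring.
    + rewrite (dp_zero (Z.of_nat q)) by lia. ring.
  - rewrite (dp_zero (Z.of_nat q + m)) by lia. ring.
Qed.

Lemma Rp_guard n m p : (n < 0 \/ n < Z.abs m)%Z -> Rp n m p = RtoC 0.
Proof.
  intros G. unfold Rp. rewrite <- (sum_C_zero (Z.to_nat n)). apply sum_n_ext. intros q.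
  apply eqC. unfold Tm. destruct (Z_lt_le_dec (Z.of_nat q + m) 0).
  - rewrite wm_neg_p by lia. ring.
  - rewrite wm_neg_s by lia. ring.
Qed.

Lemma solid_eq_Rp n m p : solid_R n m p = Rp n m p.
Proof.
  unfold solid_R.
  destruct ((n <? 0)%Z || (n <? Z.abs m)%Z)%bool eqn:G.
  - symmetry. apply Rp_guard. apply Bool.orb_true_iff in G.
    destruct G as [G|G]; apply Z.ltb_lt in G; auto.
  - apply Bool.orb_false_iff in G. destruct G as [G1 G2].
    apply Z.ltb_ge in G1. apply Z.ltb_ge in G2.
    cbv zeta.
    destruct (Z.eq_dec n 0) as [Hn0|Hn0].
    +
      assert (m = 0%Z) by lia. subst n m. simpl.
      unfold assoc_legendre, Cpowz, Rp, Tm, cf, wm, dp. simpl.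
      apply injective_projections; Csimpl; field.
    + destruct (Req_EM_T (sph_r p) 0) as [Hr|Hr].
      * rewrite Rp_origin; [|lia|exact Hr]. rewrite Hr.
        rewrite (pow_i (Z.to_nat n)) by lia. rewrite Rmult_0_l.
        generalize (Cpowz (sph_eiphi p) m). intros w. unfold Cdiv. ring.
      * set (r := sph_r p) in *.
        assert (Hr0 : 0 <= r) by (unfold r, sph_r; apply sqrt_pos).
        assert (Hr2 : r ^ 2 = vx p ^ 2 + vy p ^ 2 + vz p ^ 2) by (unfold r, sph_r; apply pow2_sqrt; nra).
        set (rho := sqrt (vx p ^ 2 + vy p ^ 2)).
        assert (Hrho0 : 0 <= rho) by apply sqrt_pos.
        assert (Hrho2 : rho ^ 2 = vx p ^ 2 + vy p ^ 2) by (apply pow2_sqrt; nra).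
        assert (Hcos : sph_cos_theta p = vz p / r).
        { unfold sph_cos_theta. fold r. destruct (Req_EM_T r 0); [contradiction|reflexivity]. }
        assert (Hsq : sqrt (1 - (vz p / r) ^ 2) = rho / r).
        { rewrite <- (sqrt_pow2 (rho / r)). f_equal. field_simplify_eq; auto. nra.
          apply Rdiv_le_0_compat; lra. }
        rewrite Hcos. unfold assoc_legendre.
        rewrite DnF_formula by lia. rewrite Hsq. unfold Sf.
        rewrite sum_pull.
        set (nn := Z.to_nat n) in *.
        assert (Hnn : n = Z.of_nat nn) by (unfold nn; lia).
        assert (Hrz : rho ^ 2 + vz p ^ 2 = r ^ 2) by lra.
        destruct (Z_lt_le_dec m 0) as [Hm|Hm].
        --
           rewrite (Z.abs_neq m) by lia.
           set (M := Z.to_nat (- m)) in *.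
           unfold Cpowz. destruct (Z.leb_spec 0 m) as [Hc|Hc]; [lia|].
           fold M.
           rewrite (Rp_ext n m p (nn + M)) by lia. rewrite (sum_shiftM _ nn M).
           2: { intros q Hq. apply eqC. unfold Tm. rewrite wm_neg_p by lia. transitivity (RtoC 0). ring. reflexivity. }
           apply sum_n_ext. intros j. apply eqC.
           replace (Z.of_nat nn - Z.of_nat M - 2 * Z.of_nat j)%Z with (n - 2 * Z.of_nat j + m)%Z by lia.
           destruct (Z_lt_le_dec (n - 2 * Z.of_nat j + m) 0) as [Hs|Hs].
           ++ rewrite hp_neg by lia.
              unfold Tm. rewrite wm_neg_s by lia.
              rewrite !Rmult_0_r. generalize (Cpow (Cinv (sph_eiphi p)) M). intros w. unfold Cdiv. ring.
           ++ rewrite hp_pos by lia.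
              rewrite (term_core nn M j (Z.to_nat (n - 2 * Z.of_nat j + m)) (eta p) (Cinv (sph_eiphi p)) rho r (vz p)); auto.
              2: apply eiphi_eta.
              2: lia.
              rewrite Hrho2. unfold M. rewrite Tm_bridge_neg by lia. reflexivity.
        --
           rewrite (Z.abs_eq m) by lia.
           set (M := Z.to_nat m) in *.
           unfold Cpowz. destruct (Z.leb_spec 0 m) as [Hc|Hc]; [|lia].
           fold M.
           unfold Rp. fold nn.
           apply sum_n_ext. intros j. apply eqC.
           replace (Z.of_nat nn - Z.of_nat M - 2 * Z.of_nat j)%Z with (n - 2 * Z.of_nat j - m)%Z by lia.
           destruct (Z_lt_le_dec (n - 2 * Z.of_nat j - m) 0) as [Hs|Hs].
           ++ rewrite hp_neg by lia.
              unfold Tm. rewrite wm_neg_s by lia.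
              rewrite !Rmult_0_r. generalize (Cpow (sph_eiphi p) M). intros w. unfold Cdiv. ring.
           ++ rewrite hp_pos by lia.
              rewrite (term_core nn M j (Z.to_nat (n - 2 * Z.of_nat j - m)) (xi p) (sph_eiphi p) rho r (vz p)); auto.
              2: apply eiphi_xi.
              2: lia.
              rewrite Hrho2. unfold M. rewrite Tm_bridge_pos by lia. reflexivity.
Qed.


Lemma good_const_mult c f : Good f -> Good (fun u v => (c * f u v)%C).
Proof. intros; constructor; [constructor|auto]. Qed.

Lemma good_pow f k : Good f -> Good (fun u v => Cpow (f u v) k).
Proof.
  intros G. induction k as [|k IH].
  apply (Gext (fun _ _ => RtoC 1)). constructor. intros; reflexivity.
  apply (Gext (fun u v => (f u v * Cpow (f u v) k)%C)). constructor; auto. intros; reflexivity.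
Qed.

Lemma good_sum (F : nat -> R -> R -> C) K : (forall k, Good (F k)) -> Good (fun u v => sum_n (fun k => F k u v) K).
Proof.
  intros G. induction K as [|K IH].
  - apply (Gext (F O)); auto. intros; rewrite sum_O; reflexivity.
  - apply (Gext (fun u v => (sum_n (fun k => F k u v) K + F (S K) u v)%C)).
    constructor; auto. intros; rewrite sum_Sn; reflexivity.
Qed.

Lemma good_dp f k : Good f -> Good (fun u v => dp (f u v) k).
Proof.
  intros G. unfold dp. destruct (k <? 0)%Z. constructor.
  apply (Gext (fun u v => (RtoC (/ INR (fact (Z.to_nat k))) * Cpow (f u v) (Z.to_nat k))%C)).
  apply good_const_mult, good_pow; auto. intros; ring.
Qed.

Lemma good_affine (a b c : C) : Good (fun u v => (RtoC u * a + RtoC v * b + c)%C).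
Proof.
  constructor. constructor. apply (Gext (fun u v => (a * RtoC u)%C)). apply good_const_mult; constructor.
  intros; ring. apply (Gext (fun u v => (b * RtoC v)%C)). apply good_const_mult; constructor.
  intros; ring. constructor.
Qed.

Section Main.
Variables v1 ru rv : vec3.

Lemma xi_rq u v : xi (r_q v1 ru rv u v) = (RtoC u * xi ru + RtoC v * xi rv + xi v1)%C.
Proof. unfold xi, r_q, vadd, vscal, vx, vy, vz; simpl. apply injective_projections; Csimpl; field. Qed.
Lemma eta_rq u v : eta (r_q v1 ru rv u v) = (RtoC u * eta ru + RtoC v * eta rv + eta v1)%C.
Proof. unfold eta, r_q, vadd, vscal, vx, vy, vz; simpl. apply injective_projections; Csimpl; field. Qed.
Lemma zc_rq u v : zc (r_q v1 ru rv u v) = (RtoC u * zc ru + RtoC v * zc rv + zc v1)%C.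
Proof. unfold zc, r_q, vadd, vscal, vx, vy, vz; simpl. apply injective_projections; Csimpl; field. Qed.

Lemma good_Rp n m : Good (fun u v => Rp n m (r_q v1 ru rv u v)).
Proof.
  unfold Rp. apply (good_sum (fun q u v => Tm n m q (r_q v1 ru rv u v))). intros q.
  unfold Tm. apply good_const_mult. unfold wm.
  constructor. constructor.
  - apply (Gext (fun u v => dp (RtoC u * xi ru + RtoC v * xi rv + xi v1)%C (Z.of_nat q + m))).
    apply good_dp, good_affine. intros; rewrite xi_rq; reflexivity.
  - apply (Gext (fun u v => dp (RtoC u * eta ru + RtoC v * eta rv + eta v1)%C (Z.of_nat q))).
    apply good_dp, good_affine. intros; rewrite eta_rq; reflexivity.
  - apply (Gext (fun u v => dp (RtoC u * zc ru + RtoC v * zc rv + zc v1)%C (n - 2 * Z.of_nat q - m))).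
    apply good_dp, good_affine. intros; rewrite zc_rq; reflexivity.
Qed.

Definition Qp (n m : Z) (b c : nat) (u v : R) : C :=
  (Rp n m (r_q v1 ru rv u v) * RtoC (u ^ b * v ^ c))%C.

Lemma good_Qp n m b c : Good (Qp n m b c).
Proof.
  unfold Qp. constructor. apply good_Rp.
  apply (Gext (fun u v => (Cpow (RtoC u) b * Cpow (RtoC v) c)%C)).
  constructor; apply good_pow; constructor.
  intros; rewrite RtoC_mult, !RtoC_pow; reflexivity.
Qed.

Lemma rq_u t y : r_q v1 ru rv t y = vadd (r_q v1 ru rv 0 y) (vscal t ru).
Proof.
  destruct v1 as [[a1 a2] a3], ru as [[b1 b2] b3], rv as [[c1 c2] c3].
  unfold r_q, vadd, vscal, vx, vy, vz; simpl. f_equal; [f_equal|]; ring.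
Qed.
Lemma rq_v x t : r_q v1 ru rv x t = vadd (r_q v1 ru rv x 0) (vscal t rv).
Proof.
  destruct v1 as [[a1 a2] a3], ru as [[b1 b2] b3], rv as [[c1 c2] c3].
  unfold r_q, vadd, vscal, vx, vy, vz; simpl. f_equal; [f_equal|]; ring.
Qed.

Lemma is_derive_RtoC (f : R -> R) x l : is_derive f x l ->
  is_derive (V := C_R_NormedModule) (fun t => RtoC (f t)) x (RtoC l).
Proof.
  intros H. apply is_derive_C_intro; simpl. exact H.
  apply (is_derive_const (K := R_AbsRing) (V := R_NormedModule)).
Qed.

Lemma Qp_du n m b c x y : (0 <= n)%Z ->
  is_derive (V := C_R_NormedModule) (fun t => Qp n m b c t y) x
    (Lad n m ru (r_q v1 ru rv x y) * RtoC (x ^ b * y ^ c) +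
     Rp n m (r_q v1 ru rv x y) * RtoC (INR b * 1 * x ^ pred b * y ^ c))%C.
Proof.
  intros Hn. unfold Qp.
  apply (is_derive_C_mult (fun t => Rp n m (r_q v1 ru rv t y)) (fun t => RtoC (t ^ b * y ^ c))).
  - apply (is_derive_C_ext (fun t => Rp n m (vadd (r_q v1 ru rv 0 y) (vscal t ru))) _ _ (Lad n m ru (vadd (r_q v1 ru rv 0 y) (vscal x ru)))).
    intros; rewrite <- rq_u; reflexivity. rewrite <- rq_u; reflexivity.
    apply Rp_deriv; auto.
  - apply is_derive_RtoC.
    replace (INR b * 1 * x ^ pred b * y ^ c) with ((INR b * 1 * x ^ pred b) * y ^ c + x ^ b * 0) by ring.
    apply (Derive.is_derive_mult (fun t => t ^ b) (fun _ => y ^ c)).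
    apply is_derive_pow, (is_derive_id (K := R_AbsRing)).
    apply (is_derive_const (K := R_AbsRing) (V := R_NormedModule)).
Qed.

Lemma Qp_dv n m b c x y : (0 <= n)%Z ->
  is_derive (V := C_R_NormedModule) (fun t => Qp n m b c x t) y
    (Lad n m rv (r_q v1 ru rv x y) * RtoC (x ^ b * y ^ c) +
     Rp n m (r_q v1 ru rv x y) * RtoC (x ^ b * (INR c * 1 * y ^ pred c)))%C.
Proof.
  intros Hn. unfold Qp.
  apply (is_derive_C_mult (fun t => Rp n m (r_q v1 ru rv x t)) (fun t => RtoC (x ^ b * t ^ c))).
  - apply (is_derive_C_ext (fun t => Rp n m (vadd (r_q v1 ru rv x 0) (vscal t rv))) _ _ (Lad n m rv (vadd (r_q v1 ru rv x 0) (vscal y rv)))).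
    intros; rewrite <- rq_v; reflexivity. rewrite <- rq_v; reflexivity.
    apply Rp_deriv; auto.
  - apply is_derive_RtoC.
    replace (x ^ b * (INR c * 1 * y ^ pred c)) with (0 * y ^ c + x ^ b * (INR c * 1 * y ^ pred c)) by ring.
    apply (Derive.is_derive_mult (fun _ => x ^ b) (fun t => t ^ c)).
    apply (is_derive_const (K := R_AbsRing) (V := R_NormedModule)).
    apply is_derive_pow, (is_derive_id (K := R_AbsRing)).
Qed.


Lemma Lad_lin n m u v P : Lad n m (r_q v1 ru rv u v) P =
  (RtoC u * Lad n m ru P + RtoC v * Lad n m rv P + Lad n m v1 P)%C.
Proof. unfold Lad. rewrite xi_rq, eta_rq, zc_rq. ring. Qed.

Lemma pow_pred_mul (u : R) (b : nat) : u * (INR b * 1 * u ^ pred b) = INR b * u ^ b.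
Proof. destruct b as [|b]. simpl; ring. simpl pred. simpl pow. ring. Qed.

Lemma pointwise n m b c u v : (0 <= n)%Z ->
  (RtoC u * (Lad n m ru (r_q v1 ru rv u v) * RtoC (u ^ b * v ^ c) +
     Rp n m (r_q v1 ru rv u v) * RtoC (INR b * 1 * u ^ pred b * v ^ c)) +
   RtoC v * (Lad n m rv (r_q v1 ru rv u v) * RtoC (u ^ b * v ^ c) +
     Rp n m (r_q v1 ru rv u v) * RtoC (u ^ b * (INR c * 1 * v ^ pred c))) +
   RtoC 2 * Qp n m b c u v)%C =
  (RtoC (IZR n + INR b + INR c + 2) * Qp n m b c u v +
   (- (Ci * xi v1)) * Qp (n - 1) (m - 1) b c u v +
   (- (Ci * eta v1)) * Qp (n - 1) (m + 1) b c u v +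
   zc v1 * Qp (n - 1) m b c u v)%C.
Proof.
  intros Hn. set (P := r_q v1 ru rv u v).
  assert (E1 : (RtoC u * RtoC (INR b * 1 * u ^ pred b * v ^ c))%C = (RtoC (INR b) * RtoC (u ^ b * v ^ c))%C).
  { rewrite <- !RtoC_mult. f_equal. transitivity ((u * (INR b * 1 * u ^ pred b)) * v ^ c). ring.
    rewrite pow_pred_mul. ring. }
  assert (E2 : (RtoC v * RtoC (u ^ b * (INR c * 1 * v ^ pred c)))%C = (RtoC (INR c) * RtoC (u ^ b * v ^ c))%C).
  { rewrite <- !RtoC_mult. f_equal. transitivity (u ^ b * (v * (INR c * 1 * v ^ pred c))). ring.
    rewrite pow_pred_mul. ring. }
  assert (E3 : (RtoC u * Lad n m ru P + RtoC v * Lad n m rv P)%C = (RtoC (IZR n) * Rp n m P - Lad n m v1 P)%C).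
  { rewrite <- euler by exact Hn. unfold P. rewrite (Lad_lin n m u v). ring. }
  transitivity ((RtoC u * Lad n m ru P + RtoC v * Lad n m rv P) * RtoC (u ^ b * v ^ c) +
     Rp n m P * (RtoC u * RtoC (INR b * 1 * u ^ pred b * v ^ c)) +
     Rp n m P * (RtoC v * RtoC (u ^ b * (INR c * 1 * v ^ pred c))) + RtoC 2 * Qp n m b c u v)%C.
  { ring. }
  rewrite E1, E2, E3. unfold Qp, Lad. fold P.
  rewrite !RtoC_plus'. ring.
Qed.

End Main.

Lemma psi_Qp v1 ru rv n m b c : psi v1 ru rv n m b c = psiC (Qp v1 ru rv n m b c).
Proof.
  unfold psi. change (psiC (Q_fun v1 ru rv n m b c) = psiC (Qp v1 ru rv n m b c)).
  apply psi_ext. intros u v. unfold Q_fun, Qp. rewrite solid_eq_Rp. reflexivity.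
Qed.

Lemma j_Qp v1 ru rv n m b c : jfun v1 ru rv n m b c = jC (Qp v1 ru rv n m b c).
Proof.
  unfold jfun, jC. apply (RInt_ext (V := C_R_CompleteNormedModule)). intros.
  unfold Q_fun, Qp. rewrite solid_eq_Rp. reflexivity.
Qed.

Theorem lemma1 (v1 ru rv : vec3) (hind : lin_indep2 ru rv)
  (n m : Z) (b c : nat) (hn : (0 <= n)%Z) (hm : (Z.abs m <= n)%Z) :
  let xi0 := Cdiv (vx v1, vy v1) (RtoC 2) in
  let eta0 := Cdiv (vx v1, Ropp (vy v1)) (RtoC 2) in
  let z0 := RtoC (vz v1) in
  psi v1 ru rv n m b c =
  Cdiv
    (Cplus (Cplus (Cplus
       (Cmult Ci (Cmult xi0 (psi v1 ru rv (n - 1) (m - 1) b c)))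
       (Cmult Ci (Cmult eta0 (psi v1 ru rv (n - 1) (m + 1) b c))))
       (Copp (Cmult z0 (psi v1 ru rv (n - 1) m b c))))
       (jfun v1 ru rv n m b c))
    (RtoC (IZR n + INR b + INR c + 2)).
Proof.
  intros xi0 eta0 z0.
  assert (Hx : xi0 = xi v1).
  { unfold xi0, xi. unfold Cdiv, Cinv. apply injective_projections; Csimpl; field. }
  assert (He : eta0 = eta v1).
  { unfold eta0, eta. unfold Cdiv, Cinv. apply injective_projections; Csimpl; field. }
  assert (Hz : z0 = zc v1) by reflexivity.
  rewrite !psi_Qp, j_Qp.
  set (N := IZR n + INR b + INR c + 2).
  assert (HN : 0 < N).
  { unfold N. assert (0 <= IZR n) by (apply IZR_le; lia). pose proof (pos_INR b). pose proof (pos_INR c). lra. }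
  pose proof (tri_C (Qp v1 ru rv n m b c) _ _ (good_Qp v1 ru rv n m b c)
    (fun x y => Qp_du v1 ru rv n m b c x y hn) (fun x y => Qp_dv v1 ru rv n m b c x y hn)) as Htri.
  assert (Hp : psiC (fun u v =>
      (RtoC N * Qp v1 ru rv n m b c u v +
       (- (Ci * xi v1)) * Qp v1 ru rv (n - 1) (m - 1) b c u v +
       (- (Ci * eta v1)) * Qp v1 ru rv (n - 1) (m + 1) b c u v +
       zc v1 * Qp v1 ru rv (n - 1) m b c u v)%C) = jC (Qp v1 ru rv n m b c)).
  { rewrite <- Htri. apply psi_ext. intros u v. symmetry. apply pointwise; auto. }
  rewrite !psi_plus in Hp by (repeat (first [apply Gplus | apply good_const_mult | apply good_Qp])).
  rewrite !psi_cmult in Hp by apply good_Qp.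
  rewrite <- Hp, Hx, He, Hz.
  field.
  intros H. apply (f_equal fst) in H. simpl in H. lra.
Qed.
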